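(* Let $N\ge1$ and assume $f\in C^{N+1}[a,b]$ with $\|f^{(N+1)}\|_{L^\infty(a,b)}\le C_f$; let $h_I=\max_k(a_k-a_{k-1})$. For each $k=1,\dots,K$ let $p_k=L_Ng_k$. Then there exists $\mathbf c_k^{\mathrm{int}}\in\mathbb C^{N+1}$ with $p_k=\mathcal L_N^{(T)}(\mathbf c_k^{\mathrm{int}})$, and \[ \|g_k-Q_{N,\epsilon}^{(T)}g_k\|_{L^2(\Lambda)}\le \|g_k-p_k\|_{L^2(\Lambda)}+\epsilon\|\mathbf c_k^{\mathrm{int}}\|_2\le \sqrt2\,\frac{h_I^{\,N+1}}{N^{\,N+1}}C_f+\epsilon\|\mathbf c_k^{\mathrm{int}}\|_2 . \] Consequently, \[ \|f-\mathcal P_{N,K}^{T,\epsilon}f\|_{L^2(I)}^2\le\sum_{k=1}^K s_k\Big(\sqrt2\,\frac{h_I^{\,N+1}}{N^{\,N+1}}C_f+\epsilon\|\mathbf c_k^{\mathrm{int}}\|_2\Big)^2 . \]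
   Context: $I=[a,b]$ with partition $a=a_0<\cdots<a_K=b$, $I_k=[a_{k-1},a_k]$, $c_k=\frac{a_{k-1}+a_k}{2}$, $s_k=\frac{a_k-a_{k-1}}{2}$, $\Lambda=[-1,1]$, $g_k(t)=f(c_k+s_kt)$ for $t\in\Lambda$. $L_Ng_k$ denotes the polynomial of degree at most $N$ interpolating $g_k$ at the equispaced nodes $t_j=-1+2j/N$, $j=0,\dots,N$. Fix $T>1$ and $\epsilon>0$. With $\{p_\ell\}$ the $L^2([-1,1])$-orthonormal Legendre polynomials, $P_\ell^{(T)}(t)=T^{-1/2}p_\ell(t/T)$, the synthesis operator is $\mathcal L_N^{(T)}:\mathbb C^{N+1}\to L^2(\Lambda)$, $\mathcal L_N^{(T)}(\mathbf c)=\sum_{\ell=0}^Nc_\ell P_\ell^{(T)}|_\Lambda$, with SVD $\mathcal L_N^{(T)}\mathbf c=\sum_j\sigma_j(v_j^*\mathbf c)u_j$ ($\sigma_j>0$, $\{v_j\}$ orthonormal in $\mathbb C^{N+1}$, $\{u_j\}$ orthonormal in $L^2(\Lambda)$). The TSVD operator is $Q_{N,\epsilon}^{(T)}g=\sum_{j:\sigma_j>\epsilon}\sigma_j^{-1}\langle g,u_j\rangle\,\mathcal L_N^{(T)}(v_j)$, and $(\mathcal P_{N,K}^{T,\epsilon}f)(x)=(Q_{N,\epsilon}^{(T)}g_k)\big(\frac{x-c_k}{s_k}\big)$ for $x\in I_k$. *)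

(* Defs.v *)
From Stdlib Require Import Reals.
From Coquelicot Require Import Coquelicot.

Open Scope R_scope.

Fixpoint csum (F : nat -> C) (n : nat) : C :=
  match n with O => RtoC 0 | S m => Cplus (csum F m) (F m) end.
Fixpoint rsum (F : nat -> R) (n : nat) : R :=
  match n with O => 0 | S m => rsum F m + F m end.
Fixpoint rprod (F : nat -> R) (n : nat) : R :=
  match n with O => 1 | S m => rprod F m * F m end.

Definition cont_within_ab (a b : R) (G : R -> R) (x : R) : Prop :=
  filterlim G (within (fun y => a <= y <= b) (locally x)) (locally (G x)).

Definition Cm_closed (m : nat) (a b : R) (F : R -> R) : Prop :=
  (forall x, a <= x <= b -> cont_within_ab a b F x) /\
  (forall k x, (k <= m)%nat -> a < x < b -> ex_derive_n F k x) /\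
  (forall k, (k <= m)%nat -> exists G : R -> R,
      (forall x, a <= x <= b -> cont_within_ab a b G x) /\
      (forall x, a < x < b -> G x = Derive_n F k x)).

Definition Cm_closed_C (m : nat) (a b : R) (f : R -> C) : Prop :=
  Cm_closed m a b (fun x => Re (f x)) /\ Cm_closed m a b (fun x => Im (f x)).

Definition DeriveC_n (f : R -> C) (k : nat) (x : R) : C :=
  (Derive_n (fun y => Re (f y)) k x, Derive_n (fun y => Im (f y)) k x).

Definition cint_Lambda (h : R -> C) : C :=
  (RInt (fun t => Re (h t)) (-1) 1, RInt (fun t => Im (h t)) (-1) 1).
Definition L2dot (g u : R -> C) : C :=
  cint_Lambda (fun t => Cmult (g t) (Cconj (u t))).
Definition L2norm (h : R -> C) : R :=
  sqrt (RInt (fun t => Cmod (h t) ^ 2) (-1) 1).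

(* ---------- vectors in C^{N+1} (entries 0..N of c : nat -> C) ---------- *)
Definition vdot (N : nat) (v c : nat -> C) : C :=
  csum (fun l => Cmult (Cconj (v l)) (c l)) (S N).
Definition vnorm (N : nat) (c : nat -> C) : R :=
  sqrt (rsum (fun l => Cmod (c l) ^ 2) (S N)).

(* legP2 n t = (P_n t, P_{n+1} t), standard Legendre polynomials via
   (n+2) P_{n+2} = (2n+3) t P_{n+1} - (n+1) P_n, P_0 = 1, P_1 = t *)
Fixpoint legP2 (n : nat) (t : R) : R * R :=
  match n with
  | O => (1, t)
  | S m => let (p, q) := legP2 m t in
           (q, ((2 * INR m + 3) * t * q - (INR m + 1) * p) / (INR m + 2))
  end.
Definition legendre (n : nat) (t : R) : R := fst (legP2 n t).
(* L^2([-1,1])-orthonormal Legendre polynomial p_l *)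
Definition legendre_on (l : nat) (t : R) : R :=
  sqrt ((2 * INR l + 1) / 2) * legendre l t.
Definition legT (T : R) (l : nat) (t : R) : R :=
  / sqrt T * legendre_on l (t / T).

Definition synth (N : nat) (T : R) (c : nat -> C) (t : R) : C :=
  csum (fun l => Cmult (c l) (RtoC (legT T l t))) (S N).

Definition is_SVD (N : nat) (T : R) (r : nat) (sig : nat -> R)
  (v : nat -> nat -> C) (u : nat -> R -> C) : Prop :=
  (forall j, (j < r)%nat -> 0 < sig j) /\
  (forall i j, (i < r)%nat -> (j < r)%nat ->
      vdot N (v i) (v j) = RtoC (if Nat.eqb i j then 1 else 0)) /\
  (forall i j, (i < r)%nat -> (j < r)%nat ->
      L2dot (u i) (u j) = RtoC (if Nat.eqb i j then 1 else 0)) /\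
  (forall (c : nat -> C) (t : R), -1 <= t <= 1 ->
      synth N T c t =
      csum (fun j => Cmult (RtoC (sig j)) (Cmult (vdot N (v j) c) (u j t))) r).

Definition TSVD (N : nat) (T eps : R) (r : nat) (sig : nat -> R)
  (v : nat -> nat -> C) (u : nat -> R -> C) (g : R -> C) (t : R) : C :=
  csum (fun j => if Rlt_dec eps (sig j)
                 then Cmult (RtoC (/ sig j)) (Cmult (L2dot g (u j)) (synth N T (v j) t))
                 else RtoC 0) r.

Definition node (N j : nat) : R := -1 + 2 * INR j / INR N.
Definition interpN (N : nat) (g : R -> C) (t : R) : C :=
  csum (fun j => Cmult (g (node N j))
          (RtoC (rprod (fun i => if Nat.eqb i j then 1
                                  else (t - node N i) / (node N j - node N i)) (S N))))
       (S N).

Definition ck (ap : nat -> R) (k : nat) : R := (ap (k - 1)%nat + ap k) / 2.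
Definition sk (ap : nat -> R) (k : nat) : R := (ap k - ap (k - 1)%nat) / 2.
Definition gk (f : R -> C) (ap : nat -> R) (k : nat) (t : R) : C :=
  f (ck ap k + sk ap k * t).
Fixpoint hI (ap : nat -> R) (K : nat) : R :=
  match K with
  | O => 0
  | S O => ap 1%nat - ap 0%nat
  | S m => Rmax (hI ap m) (ap K - ap m)
  end.
(* index k of the subinterval I_k containing x (the leftmost one at breakpoints) *)
Fixpoint seg_index (ap : nat -> R) (K : nat) (x : R) : nat :=
  match K with
  | O => O
  | S O => 1%nat
  | S m => if Rle_dec x (ap m) then seg_index ap m x else K
  end.

Definition Pfrm (N : nat) (T eps : R) (r : nat) (sig : nat -> R)
  (v : nat -> nat -> C) (u : nat -> R -> C)
  (f : R -> C) (ap : nat -> R) (K : nat) (x : R) : C :=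
  let k := seg_index ap K x in
  TSVD N T eps r sig v u (gk f ap k) ((x - ck ap k) / sk ap k).

(* Main.v *)
Require Import Defs.
From Stdlib Require Import Reals Lra Lia Factorial ClassicalEpsilon.
From Coquelicot Require Import Coquelicot.

Open Scope R_scope.

Lemma rsum_ext F G n : (forall i, (i < n)%nat -> F i = G i) -> rsum F n = rsum G n.
Proof. induction n; intros H; simpl; auto. rewrite IHn; [rewrite H|]; auto; intros; apply H; lia. Qed.
Lemma rsum_plus F G n : rsum (fun i => F i + G i) n = rsum F n + rsum G n.
Proof. induction n; simpl; [lra|rewrite IHn; lra]. Qed.
Lemma rsum_scal c F n : rsum (fun i => c * F i) n = c * rsum F n.
Proof. induction n; simpl; [lra|rewrite IHn; lra]. Qed.
Lemma rsum_le F G n : (forall i, (i < n)%nat -> F i <= G i) -> rsum F n <= rsum G n.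
Proof. induction n; intros H; simpl; [lra|]. assert (H1:=H n). assert (rsum F n <= rsum G n) by (apply IHn; intros; apply H; lia). specialize (H1 ltac:(lia)). lra. Qed.
Lemma rsum_ge0 F n : (forall i, (i < n)%nat -> 0 <= F i) -> 0 <= rsum F n.
Proof. intros H. replace 0 with (rsum (fun _ => 0) n). apply rsum_le; auto. induction n; simpl; auto. rewrite IHn; [lra|]. intros; apply H; lia. Qed.
Lemma rsum_shift F m : rsum F (S m) = F 0%nat + rsum (fun i => F (S i)) m.
Proof. induction m; simpl in *; [lra|]. rewrite IHm. lra. Qed.
Lemma rsum_zero n : rsum (fun _ => 0) n = 0.
Proof. induction n; simpl; auto; rewrite IHn; lra. Qed.

Lemma csum_ext F G n : (forall i, (i < n)%nat -> F i = G i) -> csum F n = csum G n.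
Proof. induction n; intros H; simpl; auto. rewrite IHn; [rewrite H|]; auto; intros; apply H; lia. Qed.
Lemma Re_csum F n : fst (csum F n) = rsum (fun i => fst (F i)) n.
Proof. induction n; simpl; auto. rewrite IHn; auto. Qed.
Lemma Im_csum F n : snd (csum F n) = rsum (fun i => snd (F i)) n.
Proof. induction n; simpl; auto. rewrite IHn; auto. Qed.
Lemma csum_eq F G n : rsum (fun i => fst (F i)) n = rsum (fun i => fst (G i)) n ->
  rsum (fun i => snd (F i)) n = rsum (fun i => snd (G i)) n -> csum F n = csum G n.
Proof. intros. apply injective_projections; rewrite ?Re_csum, ?Im_csum; auto. Qed.
Lemma csum_plus F G n : csum (fun i => Cplus (F i) (G i)) n = Cplus (csum F n) (csum G n).
Proof. induction n; simpl. apply injective_projections; simpl; lra. rewrite IHn. apply injective_projections; simpl; lra. Qed.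
Lemma csum_scal c F n : csum (fun i => Cmult c (F i)) n = Cmult c (csum F n).
Proof. induction n; simpl. apply injective_projections; simpl; lra. rewrite IHn. apply injective_projections; simpl; lra. Qed.
Lemma csum_zero n : csum (fun _ => RtoC 0) n = RtoC 0.
Proof. induction n; simpl; auto. rewrite IHn. apply injective_projections; simpl; lra. Qed.
Lemma csum_conj F n : Cconj (csum F n) = csum (fun i => Cconj (F i)) n.
Proof. induction n; simpl. apply injective_projections; simpl; lra. rewrite <- IHn. apply injective_projections; simpl; lra. Qed.
Lemma csum_delta F n i : (i < n)%nat -> (forall j, (j < n)%nat -> j <> i -> F j = RtoC 0) -> csum F n = F i.
Proof.
  induction n; intros Hi H; [lia|]. simpl. destruct (Nat.eq_dec i n).
  - subst. rewrite csum_ext with (G := fun _ => RtoC 0). rewrite csum_zero.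
    apply injective_projections; simpl; lra. intros; apply H; lia.
  - rewrite IHn; [|lia|intros; apply H; lia]. rewrite (H n); [|lia|auto].
    apply injective_projections; simpl; lra.
Qed.

Definition peval (a : nat -> R) (n : nat) (t : R) := rsum (fun i => a i * t ^ i) (S n).
Definition PolyLC (n : nat) (c : R) (q : R -> R) := exists a, a n = c /\ forall t, q t = peval a n t.
Definition Poly (n : nat) (q : R -> R) := exists a, forall t, q t = peval a n t.

Lemma PolyLC_Poly n c q : PolyLC n c q -> Poly n q.
Proof. intros [a [_ H]]; exists a; auto. Qed.
Lemma Poly_LC n q : Poly n q -> exists c, PolyLC n c q.
Proof. intros [a H]; exists (a n), a; auto. Qed.
Lemma PolyLC_ext n c q q' : (forall t, q t = q' t) -> PolyLC n c q -> PolyLC n c q'.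
Proof. intros E [a [H1 H2]]; exists a; split; auto; intros; rewrite <- E; auto. Qed.
Lemma Poly_ext n q q' : (forall t, q t = q' t) -> Poly n q -> Poly n q'.
Proof. intros E [a H2]; exists a; intros; rewrite <- E; auto. Qed.
Lemma PolyLC_S0 n q : PolyLC (S n) 0 q -> Poly n q.
Proof. intros [a [H1 H2]]; exists a; intros t; rewrite H2; unfold peval. change (rsum (fun i => a i * t ^ i) (S (S n))) with (rsum (fun i => a i * t ^ i) (S n) + a (S n) * t ^ (S n)). rewrite H1; ring. Qed.
Lemma Poly_extLC n q : Poly n q -> PolyLC (S n) 0 q.
Proof.
  intros [a H]. exists (fun i => if Nat.eqb i (S n) then 0 else a i). split.
  rewrite Nat.eqb_refl; auto. intros t. rewrite H. unfold peval.
  change (rsum ?F (S (S n))) with (rsum F (S n) + F (S n)). cbv beta.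
  rewrite Nat.eqb_refl. erewrite (rsum_ext (fun i => (if Nat.eqb i (S n) then 0 else a i) * t ^ i) (fun i => a i * t ^ i)). lra.
  intros i Hi. destruct (Nat.eqb_spec i (S n)); [lia|auto].
Qed.
Lemma PolyLC_lin n c1 c2 q1 q2 al be : PolyLC n c1 q1 -> PolyLC n c2 q2 ->
  PolyLC n (al * c1 + be * c2) (fun t => al * q1 t + be * q2 t).
Proof.
  intros [a1 [E1 H1]] [a2 [E2 H2]]. exists (fun i => al * a1 i + be * a2 i). split.
  rewrite E1, E2; auto. intros t; rewrite H1, H2. unfold peval.
  rewrite <- !rsum_scal, <- rsum_plus. apply rsum_ext; intros; ring.
Qed.
Lemma Poly_lin n q1 q2 al be : Poly n q1 -> Poly n q2 -> Poly n (fun t => al * q1 t + be * q2 t).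
Proof. intros H1 H2. destruct (Poly_LC _ _ H1) as [c1 L1]. destruct (Poly_LC _ _ H2) as [c2 L2].
  eapply PolyLC_Poly, PolyLC_lin; eauto. Qed.
Lemma PolyLC_const c : PolyLC 0 c (fun _ => c).
Proof. exists (fun _ => c); split; auto; intros; unfold peval; simpl; ring. Qed.
Lemma Poly_mono n m q : (n <= m)%nat -> Poly n q -> Poly m q.
Proof. induction 1; auto. intros H'. apply PolyLC_Poly with 0. apply Poly_extLC; auto. Qed.
Lemma PolyLC_mul_t n c q : PolyLC n c q -> PolyLC (S n) c (fun t => t * q t).
Proof.
  intros [a [E H]]. exists (fun i => match i with O => 0 | S j => a j end). split; auto.
  intros t. rewrite H. unfold peval. rewrite (rsum_shift _ (S n)).
  rewrite <- rsum_scal. match goal with |- _ = ?A + _ => replace A with 0 by (simpl; ring) end.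
  rewrite Rplus_0_l. apply rsum_ext; intros; simpl; ring.
Qed.
Lemma Poly_mul_lin n q al be : Poly n q -> Poly (S n) (fun t => q t * (al * t + be)).
Proof.
  intros H. destruct (Poly_LC _ _ H) as [c L].
  apply PolyLC_Poly with (al * c + be * 0).
  apply PolyLC_ext with (fun t => al * (t * q t) + be * q t); [intros; ring|].
  apply PolyLC_lin. apply PolyLC_mul_t; auto. apply Poly_extLC; auto.
Qed.
Lemma PolyLC_scale n c q T : T <> 0 -> PolyLC n c q -> PolyLC n (c / T ^ n) (fun t => q (t / T)).
Proof.
  intros HT [a [E H]]. exists (fun i => a i / T ^ i). split. rewrite E; auto.
  intros t. rewrite H. unfold peval. apply rsum_ext. intros i _.
  unfold Rdiv. rewrite Rpow_mult_distr, pow_inv. ring.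
Qed.
Lemma Poly_const c : Poly 0 (fun _ => c).
Proof. eapply PolyLC_Poly, PolyLC_const. Qed.

Lemma is_derive_eq (f : R -> R) x l l' : is_derive f x l -> l = l' -> is_derive f x l'.
Proof. intros H ->; auto. Qed.
Lemma is_derive_Rplus (f g : R -> R) x df dg : is_derive f x df -> is_derive g x dg -> is_derive (fun y => f y + g y) x (df + dg).
Proof. intros. apply (is_derive_plus f g x df dg); auto. Qed.
Lemma peval_derive a n t : is_derive (peval a (S n)) t (peval (fun i => INR (S i) * a (S i)) n t).
Proof.
  induction n.
  - unfold peval; simpl. eapply is_derive_ext.
    { intros x. instantiate (1 := fun x => a 0%nat + a 1%nat * x). simpl. ring. }
    auto_derive; auto. ring.
  - eapply is_derive_ext. { intros x. unfold peval. change (rsum ?F (S (S (S n)))) with (rsum F (S (S n)) + F (S (S n))).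
      fold (peval a (S n) x). reflexivity. }
    eapply is_derive_eq. apply is_derive_Rplus. exact IHn.
    apply is_derive_scal. apply is_derive_pow. apply is_derive_id.
    unfold peval. change (rsum ?F (S (S n))) with (rsum F (S n) + F (S n)). simpl. unfold one; simpl. ring.
Qed.
Lemma PolyLC_derive n c q : PolyLC (S n) c q -> exists q', PolyLC n (INR (S n) * c) q' /\ forall t, is_derive q t (q' t).
Proof.
  intros [a [E H]]. exists (peval (fun i => INR (S i) * a (S i)) n). split.
  exists (fun i => INR (S i) * a (S i)); split; [rewrite E|]; auto.
  intros t. eapply is_derive_ext; [|apply peval_derive]. intros; rewrite H; auto.
Qed.

Lemma Derive_n_S f k x : Derive_n f (S k) x = Derive_n (Derive f) k x.
Proof. induction k in x |- *; simpl; auto. apply Derive_ext. intros; rewrite <- IHk; auto. Qed.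
Lemma ex_derive_n_S f k x : ex_derive f x -> ex_derive_n (Derive f) k x -> ex_derive_n f (S k) x.
Proof. destruct k; simpl; auto. intros _ H. eapply ex_derive_ext; [|exact H]. intros; rewrite <- Derive_n_S; auto. Qed.
Lemma ex_derive_n_S' f k x : ex_derive_n f (S k) x -> ex_derive_n (Derive f) k x.
Proof. destruct k; simpl; auto. intros H. eapply ex_derive_ext; [|exact H]. intros; rewrite <- Derive_n_S; auto. Qed.

Lemma Poly_smooth n q : Poly n q -> (forall k t, ex_derive_n q k t) /\ (forall k t, (n < k)%nat -> Derive_n q k t = 0).
Proof.
  revert q; induction n; intros q Hq.
  - destruct Hq as [a H]. assert (Hc : forall t, q t = a 0%nat) by (intros; rewrite H; unfold peval; simpl; ring).
    assert (D0 : forall k t, Derive_n q (S k) t = 0).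
    { intros k t. rewrite Derive_n_S. rewrite (Derive_n_ext _ (fun _ => 0)).
      destruct k; simpl; auto. apply Derive_n_const.
      intros; rewrite <- (Derive_const (a 0%nat) t0); apply Derive_ext; intros; rewrite Hc; auto. }
    split.
    + intros [|k] t; [simpl; auto|]. simpl. destruct k.
      apply (ex_derive_ext (fun _ => a 0%nat)); [intros; simpl; rewrite Hc; auto|apply ex_derive_const].
      apply (ex_derive_ext (fun _ => 0)); [intros; rewrite D0; auto|apply ex_derive_const].
    + intros [|k] t Hk; [lia|]. apply D0.
  - destruct (Poly_LC _ _ Hq) as [c L]. destruct (PolyLC_derive _ _ _ L) as [q' [L' D]].
    destruct (IHn q' (PolyLC_Poly _ _ _ L')) as [IH1 IH2].
    assert (DE : forall t, Derive q t = q' t) by (intros; apply is_derive_unique; auto).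
    split.
    + intros [|k] t; [simpl; auto|]. apply ex_derive_n_S. eexists; apply D.
      eapply ex_derive_n_ext; [intros; symmetry; apply DE|]. auto.
    + intros [|k] t Hk; [lia|]. rewrite Derive_n_S. rewrite (Derive_n_ext _ q'); auto. apply IH2; lia.
Qed.

Lemma PolyLC_Dn n c q : PolyLC n c q -> forall t, Derive_n q n t = c * INR (fact n).
Proof.
  revert c q; induction n; intros c q L t.
  - destruct L as [a [E H]]. simpl. rewrite H; unfold peval; simpl; rewrite E; ring.
  - destruct (PolyLC_derive _ _ _ L) as [q' [L' D]].
    assert (DE : forall t, Derive q t = q' t) by (intros; apply is_derive_unique; auto).
    rewrite Derive_n_S, (Derive_n_ext _ q'); auto. rewrite (IHn _ _ L').
    change (fact (S n)) with (S n * fact n)%nat. rewrite mult_INR. ring.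
Qed.

Lemma Poly_continuous n q : Poly n q -> forall t, continuous q t.
Proof.
  intros Hq t. destruct (Poly_smooth _ _ Hq) as [H _]. apply (ex_derive_continuous (K:=R_AbsRing) (V:=R_NormedModule) q t).
  specialize (H 1%nat t). simpl in H. eapply ex_derive_ext; [|exact H]. auto.
Qed.

Lemma Poly_rsum n F m : (forall j, (j < m)%nat -> Poly n (F j)) -> Poly n (fun t => rsum (fun j => F j t) m).
Proof.
  induction m; intros H.
  - simpl. eapply Poly_mono; [|apply Poly_const]. lia.
  - simpl. apply Poly_ext with (fun t => 1 * rsum (fun j => F j t) m + 1 * F m t); [intros; ring|].
    apply Poly_lin; auto.
Qed.

Lemma legP2_fst m t : fst (legP2 (S m) t) = snd (legP2 m t).
Proof. simpl. destruct (legP2 m t); reflexivity. Qed.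
Lemma legP2_snd m t : snd (legP2 (S m) t) =
  ((2 * INR m + 3) * t * snd (legP2 m t) - (INR m + 1) * fst (legP2 m t)) / (INR m + 2).
Proof. simpl. destruct (legP2 m t); reflexivity. Qed.

Lemma legP2_poly n : exists al be, 0 < al /\ 0 < be /\
  PolyLC n al (fun t => fst (legP2 n t)) /\ PolyLC (S n) be (fun t => snd (legP2 n t)).
Proof.
  induction n.
  - exists 1, 1. split; [lra|split;[lra|split]]. apply PolyLC_const.
    apply PolyLC_ext with (fun t => t * 1). intros; simpl; ring. apply PolyLC_mul_t, PolyLC_const.
  - destruct IHn as [al [be [Ha [Hb [L1 L2]]]]].
    exists be, ((2 * INR n + 3) / (INR n + 2) * be + (- (INR n + 1) / (INR n + 2)) * 0).
    assert (0 <= INR n) by apply pos_INR.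
    split; auto. split. rewrite Rmult_0_r, Rplus_0_r. apply Rmult_lt_0_compat; auto. apply Rdiv_lt_0_compat; lra.
    split. apply PolyLC_ext with (fun t => snd (legP2 n t)); auto. intros; rewrite legP2_fst; auto.
    apply PolyLC_ext with (fun t => (2 * INR n + 3) / (INR n + 2) * (t * snd (legP2 n t)) + (- (INR n + 1) / (INR n + 2)) * fst (legP2 n t)).
    intros; rewrite legP2_snd. field. lra.
    apply PolyLC_lin. apply PolyLC_mul_t; auto. apply Poly_extLC. eapply Poly_mono; [|eapply PolyLC_Poly; eauto]. lia.
Qed.

Lemma PolyLC_scal n c q k : PolyLC n c q -> PolyLC n (k * c) (fun t => k * q t).
Proof. intros L. apply PolyLC_ext with (fun t => k * q t + 0 * q t); [intros; ring|].
  replace (k * c) with (k * c + 0 * c) by ring. apply PolyLC_lin; auto. Qed.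

Lemma legT_poly T l : 0 < T -> exists c, c <> 0 /\ PolyLC l c (legT T l).
Proof.
  intros HT. destruct (legP2_poly l) as [al [be [Ha [_ [L _]]]]].
  assert (Hs : 0 < sqrt ((2 * INR l + 1) / 2)). { apply sqrt_lt_R0. assert (0 <= INR l) by apply pos_INR. lra. }
  assert (HsT : 0 < sqrt T) by (apply sqrt_lt_R0; auto).
  exists (/ sqrt T * sqrt ((2 * INR l + 1) / 2) * (al / T ^ l)). split.
  apply Rmult_integral_contrapositive. split.
  apply Rmult_integral_contrapositive; split; [apply Rinv_neq_0_compat|]; lra.
  apply Rmult_integral_contrapositive; split; [lra|]. apply Rinv_neq_0_compat, pow_nonzero; lra.
  apply PolyLC_ext with (fun t => (/ sqrt T * sqrt ((2 * INR l + 1) / 2)) * fst (legP2 l (t / T))).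
  intros; unfold legT, legendre_on, legendre; ring.
  apply PolyLC_scal. apply (PolyLC_scale l al (fun t => fst (legP2 l t))); [lra|auto].
Qed.

Lemma legT_span T n q : 0 < T -> Poly n q -> exists c : nat -> R, forall t, q t = rsum (fun l => c l * legT T l t) (S n).
Proof.
  intros HT. revert q. induction n; intros q Hq.
  - destruct (legT_poly T 0 HT) as [g [Hg [b [Eb Hb]]]]. destruct Hq as [a Ha].
    exists (fun _ => a 0%nat / g). intros t. rewrite Ha. unfold peval; simpl. rewrite Hb. unfold peval; simpl. rewrite Eb. field; auto.
  - destruct (legT_poly T (S n) HT) as [g [Hg Lg]]. destruct (Poly_LC _ _ Hq) as [cq Lq].
    assert (L0 : PolyLC (S n) 0 (fun t => 1 * q t + (- (cq / g)) * legT T (S n) t)).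
    { assert (E0 : 1 * cq + (- (cq / g)) * g = 0) by (field; auto).  rewrite <- E0. apply PolyLC_lin; auto. }
    destruct (IHn _ (PolyLC_S0 _ _ L0)) as [c Hc].
    exists (fun l => if Nat.eqb l (S n) then cq / g else c l). intros t.
    change (rsum ?F (S (S n))) with (rsum F (S n) + F (S n)). cbv beta. rewrite Nat.eqb_refl.
    erewrite (rsum_ext (fun l => (if Nat.eqb l (S n) then cq / g else c l) * legT T l t)). rewrite <- (Hc t). ring.
    intros i Hi. destruct (Nat.eqb_spec i (S n)); [lia|auto].
Qed.

Lemma synth_real N T (cr ci : nat -> R) t : synth N T (fun l => (cr l, ci l)) t =
  (rsum (fun l => cr l * legT T l t) (S N), rsum (fun l => ci l * legT T l t) (S N)).
Proof. unfold synth. apply injective_projections; [rewrite Re_csum|rewrite Im_csum]; apply rsum_ext; intros; simpl; ring. Qed.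

Definition Lfac (N j : nat) (t : R) (i : nat) : R := if Nat.eqb i j then 1 else (t - node N i) / (node N j - node N i).
Definition Lb (N j : nat) (t : R) : R := rprod (Lfac N j t) (S N).
Definition rinterp (N : nat) (G : R -> R) (t : R) : R := rsum (fun j => G (node N j) * Lb N j t) (S N).
Definition omega (N : nat) (t : R) : R := rprod (fun i => t - node N i) (S N).

Lemma interpN_re N g t : fst (interpN N g t) = rinterp N (fun x => fst (g x)) t.
Proof. unfold interpN, rinterp. rewrite Re_csum. apply rsum_ext; intros; unfold Lb, Lfac; simpl; ring. Qed.
Lemma interpN_im N g t : snd (interpN N g t) = rinterp N (fun x => snd (g x)) t.
Proof. unfold interpN, rinterp. rewrite Im_csum. apply rsum_ext; intros; unfold Lb, Lfac; simpl; ring. Qed.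

Lemma Lb_poly_gen N j m : Poly (if Nat.ltb j m then (m - 1)%nat else m) (fun t => rprod (Lfac N j t) m).
Proof.
  induction m.
  - simpl. apply Poly_const.
  - simpl rprod. unfold Lfac at 2. destruct (Nat.eqb_spec m j).
    + subst. replace (Nat.ltb j (S j)) with true by (symmetry; apply Nat.ltb_lt; lia).
      replace (Nat.ltb j j) with false in IHm by (symmetry; apply Nat.ltb_ge; lia).
      replace (S j - 1)%nat with j by lia. eapply Poly_ext; [|exact IHm]. intros; simpl; ring.
    + apply Poly_ext with (fun t => rprod (Lfac N j t) m * (/ (node N j - node N m) * t + (- node N m / (node N j - node N m)))).
      intros; unfold Rdiv; ring.
      replace (if Nat.ltb j (S m) then (S m - 1)%nat else S m) with (S (if Nat.ltb j m then (m - 1)%nat else m)).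
      apply Poly_mul_lin; auto.
      destruct (Nat.ltb_spec j m); destruct (Nat.ltb_spec j (S m)); lia.
Qed.
Lemma Lb_poly N j : (j < S N)%nat -> Poly N (Lb N j).
Proof. intros H. unfold Lb. generalize (Lb_poly_gen N j (S N)). replace (Nat.ltb j (S N)) with true by (symmetry; apply Nat.ltb_lt; lia).
  replace (S N - 1)%nat with N by lia. auto. Qed.
Lemma rinterp_poly N G : Poly N (rinterp N G).
Proof. unfold rinterp. apply (Poly_rsum N (fun j t => G (node N j) * Lb N j t)). intros j Hj.
  apply Poly_ext with (fun t => 0 * Lb N j t + G (node N j) * Lb N j t); [intros; ring|]. apply Poly_lin; apply Lb_poly; auto. Qed.

Lemma omega_poly_gen N m : PolyLC m 1 (fun t => rprod (fun i => t - node N i) m).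
Proof.
  induction m. simpl. apply PolyLC_const.
  simpl rprod. apply PolyLC_ext with (fun t => 1 * (t * rprod (fun i => t - node N i) m) + (- node N m) * rprod (fun i => t - node N i) m).
  intros; ring. replace 1 with (1 * 1 + - node N m * 0) at 1 by ring. apply PolyLC_lin.
  apply PolyLC_mul_t; auto. apply Poly_extLC. eapply PolyLC_Poly; eauto.
Qed.
Lemma omega_poly N : PolyLC (S N) 1 (omega N).
Proof. apply omega_poly_gen. Qed.

Lemma rprod_zero F m i : (i < m)%nat -> F i = 0 -> rprod F m = 0.
Proof. induction m; intros Hi H; [lia|]. simpl. destruct (Nat.eq_dec i m). subst; rewrite H; ring. rewrite IHm; [ring|lia|auto]. Qed.
Lemma rprod_one F m : (forall i, (i < m)%nat -> F i = 1) -> rprod F m = 1.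
Proof. induction m; intros H; simpl; auto. rewrite IHm, H; [ring|lia|]. intros; apply H; lia. Qed.
Lemma rsum_delta F n i : (i < n)%nat -> (forall j, (j < n)%nat -> j <> i -> F j = 0) -> rsum F n = F i.
Proof.
  induction n; intros Hi H; [lia|]. simpl. destruct (Nat.eq_dec i n).
  - subst. rewrite (rsum_ext _ (fun _ => 0)), rsum_zero; [ring|]. intros; apply H; lia.
  - rewrite IHn; [|lia|intros; apply H; lia]. rewrite (H n); [ring|lia|auto].
Qed.

Lemma node_inj N i j : (1 <= N)%nat -> node N i = node N j -> i = j.
Proof. intros HN E. unfold node in E. assert (0 < INR N) by (apply lt_0_INR; lia).
  apply INR_eq. apply (Rmult_eq_reg_l (2 / INR N)); [|apply Rgt_not_eq, Rdiv_lt_0_compat; lra].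
  unfold Rdiv in *. lra. Qed.

Lemma Lb_node N j i : (1 <= N)%nat -> (j < S N)%nat -> (i < S N)%nat -> Lb N j (node N i) = if Nat.eqb i j then 1 else 0.
Proof.
  intros HN Hj Hi. unfold Lb. destruct (Nat.eqb_spec i j).
  - subst. apply rprod_one. intros l Hl. unfold Lfac. destruct (Nat.eqb_spec l j); auto.
    field. intros E. apply n. apply (node_inj N); auto. lra.
  - apply (rprod_zero _ _ i); auto. unfold Lfac. destruct (Nat.eqb_spec i j); [lia|]. unfold Rdiv; ring.
Qed.
Lemma rinterp_node N G i : (1 <= N)%nat -> (i < S N)%nat -> rinterp N G (node N i) = G (node N i).
Proof.
  intros HN Hi. unfold rinterp. rewrite (rsum_delta _ _ i); auto.
  rewrite Lb_node, Nat.eqb_refl; auto; ring.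
  intros j Hj E. rewrite Lb_node; auto. destruct (Nat.eqb_spec i j); [lia|ring].
Qed.

Lemma ball_R x eps y : ball x eps y <-> Rabs (y - x) < eps.
Proof. unfold ball; simpl. unfold AbsRing_ball. unfold abs, minus, plus, opp; simpl. tauto. Qed.

Definition clamp (a b z : R) : R := Rmax a (Rmin b z).
Lemma clamp_in a b z : a <= b -> a <= clamp a b z <= b.
Proof. intros. unfold clamp, Rmax, Rmin. repeat destruct Rle_dec; lra. Qed.
Lemma clamp_id a b z : a <= z <= b -> clamp a b z = z.
Proof. intros. unfold clamp, Rmax, Rmin. repeat destruct Rle_dec; lra. Qed.
Lemma clamp_lip a b x y : a <= b -> Rabs (clamp a b x - clamp a b y) <= Rabs (x - y).
Proof. intros. unfold clamp, Rmax, Rmin. repeat destruct Rle_dec; unfold Rabs; repeat destruct Rcase_abs; lra. Qed.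
Lemma clamp_cont a b w : a <= b -> continuous (clamp a b) w.
Proof.
  intros Hab. apply filterlim_locally. intros eps. exists eps. intros y Hy.
  apply ball_R in Hy. apply ball_R. eapply Rle_lt_trans; [apply clamp_lip; auto|auto].
Qed.
Lemma clamp_clamp a b a' b' y : a <= a' -> a' <= b' -> b' <= b -> clamp a b (clamp a' b' y) = clamp a' b' y.
Proof. intros. apply clamp_id. generalize (clamp_in a' b' y); lra. Qed.

Definition CC (a b : R) (f : R -> R) := forall w, continuous (fun y => f (clamp a b y)) w.

Lemma CC_sub a b a' b' f : a <= a' -> a' <= b' -> b' <= b -> CC a b f -> CC a' b' f.
Proof.
  intros H1 H2 H3 Hf w. apply continuous_ext with (fun y => (fun z => f (clamp a b z)) (clamp a' b' y)).
  intros; rewrite clamp_clamp; auto. apply (continuous_comp (clamp a' b') (fun z => f (clamp a b z))); [apply clamp_cont; lra|apply Hf].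
Qed.
Lemma CC_of_cont a b f : a <= b -> (forall w, a <= w <= b -> continuous f w) -> CC a b f.
Proof. intros Hab H w. apply (continuous_comp (clamp a b) f); [apply clamp_cont; auto|apply H, clamp_in; auto]. Qed.
Lemma CC_plus a b f g : CC a b f -> CC a b g -> CC a b (fun y => f y + g y).
Proof. intros Hf Hg w. apply (continuous_plus (fun y => f (clamp a b y)) (fun y => g (clamp a b y))); auto. Qed.
Lemma CC_scal a b f k : CC a b f -> CC a b (fun y => k * f y).
Proof. intros Hf w. apply (continuous_scal (fun _ => k) (fun y => f (clamp a b y))); auto. apply continuous_const. Qed.
Lemma CC_mult a b f g : CC a b f -> CC a b g -> CC a b (fun y => f y * g y).
Proof. intros Hf Hg w. apply (continuous_mult (fun y => f (clamp a b y)) (fun y => g (clamp a b y))); auto. Qed.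
Lemma CC_ext a b f g : (forall y, a <= y <= b -> f y = g y) -> a <= b -> CC a b f -> CC a b g.
Proof. intros E Hab Hf w. eapply continuous_ext; [|apply Hf]. intros; apply E, clamp_in; auto. Qed.
Lemma CC_poly a b n q : a <= b -> Poly n q -> CC a b q.
Proof. intros Hab Hq. apply CC_of_cont; auto. intros; eapply Poly_continuous; eauto. Qed.
Lemma CC_within a b f : a <= b -> (forall x, a <= x <= b -> cont_within_ab a b f x) -> CC a b f.
Proof.
  intros Hab H w. unfold continuous.
  eapply (filterlim_comp _ _ _ (clamp a b) f _ (within (fun y => a <= y <= b) (locally (clamp a b w)))).
  - intros P HP. unfold within in HP. generalize (clamp_cont a b w Hab _ HP). unfold filtermap. apply filter_imp.
    intros y Hy. apply Hy, clamp_in; auto.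
  - apply H, clamp_in; auto.
Qed.

Lemma loc_in a b x : a < x < b -> locally x (fun y => a < y < b).
Proof. intros H. apply (locally_interval _ x a b); simpl; try lra. auto. Qed.

Lemma Rolle_CC f x y : x < y -> CC x y f -> (forall w, x < w < y -> ex_derive f w) -> f x = f y ->
  exists xi, x < xi < y /\ Derive f xi = 0.
Proof.
  intros Hxy Hc Hd Heq. set (h := fun z => f (clamp x y z)).
  assert (Hloc : forall w, x < w < y -> locally w (fun z => f z = h z)).
  { intros w Hw. generalize (loc_in _ _ _ Hw). apply filter_imp. intros z Hz. unfold h. rewrite clamp_id; lra. }
  assert (pr : forall w, x < w < y -> derivable_pt h w).
  { intros w Hw. apply ex_derive_Reals_0. eapply ex_derive_ext_loc; [apply Hloc; auto|apply Hd; auto]. }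
  destruct (Rolle h x y pr) as [c [P Hc']]; auto.
  - intros w _. apply continuity_pt_filterlim. apply Hc.
  - unfold h; rewrite !clamp_id; lra.
  - exists c; split; auto. rewrite Derive_Reals in Hc'. rewrite <- Hc'. apply Derive_ext_loc. apply Hloc; auto.
Qed.

Lemma incr_le (z : nat -> R) n : (forall i, (i < n)%nat -> z i < z (S i)) -> forall i j, (i <= j <= n)%nat -> z i <= z j.
Proof.
  intros H i j Hij. induction j. replace i with 0%nat by lia; lra.
  destruct (Nat.eq_dec i (S j)). subst; lra. specialize (IHj ltac:(lia)). specialize (H j ltac:(lia)). lra.
Qed.

Lemma gen_rolle n : forall (E : R -> R) (z : nat -> R),
  (forall i, (i < S n)%nat -> z i < z (S i)) ->
  (forall i, (i <= S n)%nat -> E (z i) = 0) ->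
  CC (z 0%nat) (z (S n)) E ->
  (forall k w, (k <= S n)%nat -> z 0%nat < w < z (S n) -> ex_derive_n E k w) ->
  exists xi, z 0%nat < xi < z (S n) /\ Derive_n E (S n) xi = 0.
Proof.
  induction n; intros E z Hz Hzero Hc Hd.
  - assert (D1 : forall w, z 0%nat < w < z 1%nat -> ex_derive E w).
    { intros w Hw. generalize (Hd 1%nat w ltac:(lia) Hw). simpl. apply ex_derive_ext. auto. }
    assert (E1 : E (z 0%nat) = E (z 1%nat)) by (rewrite !Hzero; auto).
    destruct (Rolle_CC E (z 0%nat) (z 1%nat) (Hz 0%nat ltac:(lia)) Hc D1 E1) as [xi [H1 H2]].
    exists xi; split; auto.
  - assert (Hle := incr_le z (S (S n)) Hz).
    assert (Hy : forall i, exists y, (i < S (S n))%nat -> z i < y < z (S i) /\ Derive E y = 0).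
    { intros i. destruct (Nat.lt_ge_cases i (S (S n))) as [Hi|Hi]; [|exists 0; intros; lia].
      destruct (Rolle_CC E (z i) (z (S i))) as [y [Hy1 Hy2]]; auto.
      - apply (CC_sub (z 0%nat) (z (S (S n)))); [apply Hle; lia|apply Rlt_le, Hz; auto|apply Hle; lia|exact Hc].
      - intros w Hw. assert (Hw' : z 0%nat < w < z (S (S n))).
        { assert (z 0%nat <= z i) by (apply Hle; lia). assert (z (S i) <= z (S (S n))) by (apply Hle; lia). lra. }
        generalize (Hd 1%nat w ltac:(lia) Hw'). simpl. apply ex_derive_ext; auto.
      - rewrite !Hzero; auto; lia.
      - exists y; auto. }
    set (y := fun i => proj1_sig (constructive_indefinite_description _ (Hy i))).
    assert (Hyp : forall i, (i < S (S n))%nat -> z i < y i < z (S i) /\ Derive E (y i) = 0).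
    { intros i Hi. unfold y. destruct (constructive_indefinite_description _ (Hy i)); simpl; auto. }
    assert (Hy0 : z 0%nat < y 0%nat) by (apply Hyp; lia).
    assert (HyS : y (S n) < z (S (S n))) by (apply Hyp; lia).
    destruct (IHn (Derive E) y) as [xi [Hxi1 Hxi2]].
    + intros i Hi. destruct (Hyp i ltac:(lia)) as [[A1 A2] _]. destruct (Hyp (S i) ltac:(lia)) as [[B1 B2] _]. lra.
    + intros i Hi. apply Hyp; lia.
    + assert (y 0%nat <= y (S n)).
      { apply (incr_le y (S n)); [|lia]. intros i Hi. destruct (Hyp i ltac:(lia)) as [[A1 A2] _]. destruct (Hyp (S i) ltac:(lia)) as [[B1 B2] _]. lra. }
      apply CC_of_cont; auto. intros w Hw. apply (ex_derive_continuous (K:=R_AbsRing) (V:=R_NormedModule)).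
      generalize (Hd 2%nat w ltac:(lia) ltac:(lra)). simpl. apply ex_derive_ext. intros; apply Derive_ext; auto.
    + intros k w Hk Hw. apply ex_derive_n_S'. apply Hd; [lia|lra].
    + exists xi. split; [lra|]. rewrite Derive_n_S. auto.
Qed.

Lemma find_interval (z : nat -> R) n t : (forall i, (i < n)%nat -> z i < z (S i)) -> z 0%nat <= t <= z n ->
  (exists i, (i <= n)%nat /\ t = z i) \/ (exists m, (m < n)%nat /\ z m < t < z (S m)).
Proof.
  induction n; intros Hz Ht.
  - left; exists 0%nat; split; [lia|lra].
  - destruct (Rle_dec t (z n)).
    + assert (Hz' : forall i, (i < n)%nat -> z i < z (S i)) by (intros; apply Hz; lia).
      destruct (IHn Hz' ltac:(lra)) as [[i [Hi E]]|[m [Hm E]]].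
      left; exists i; split; auto. right; exists m; split; auto.
    + destruct (Req_dec t (z (S n))). left; exists (S n); auto.
      right; exists n; split; auto; lra.
Qed.

Lemma node_incr N i : (1 <= N)%nat -> node N i < node N (S i).
Proof. intros HN. unfold node. rewrite S_INR. assert (0 < INR N) by (apply lt_0_INR; lia).
  unfold Rdiv. apply Rplus_lt_compat_l. apply Rmult_lt_compat_r. apply Rinv_0_lt_compat; auto. lra. Qed.
Lemma node_0 N : node N 0 = -1.
Proof. unfold node. simpl. unfold Rdiv; ring. Qed.
Lemma node_N N : (1 <= N)%nat -> node N N = 1.
Proof. intros. unfold node. assert (0 < INR N) by (apply lt_0_INR; lia). field. lra. Qed.

Lemma rprod_nonzero F m : (forall i, (i < m)%nat -> F i <> 0) -> rprod F m <> 0.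
Proof. induction m; intros H; simpl. lra. apply Rmult_integral_contrapositive; split; [apply IHm|apply H]; auto. Qed.

Lemma interp_error N G M t : (1 <= N)%nat -> CC (-1) 1 G ->
  (forall k x, (k <= S N)%nat -> -1 < x < 1 -> ex_derive_n G k x) ->
  (forall x, -1 < x < 1 -> Rabs (Derive_n G (S N) x) <= M) -> -1 <= t <= 1 ->
  Rabs (G t - rinterp N G t) <= M / INR (fact (S N)) * Rabs (omega N t).
Proof.
  intros HN Hc Hd HM Ht.
  assert (HM0 : 0 <= M) by (eapply Rle_trans; [apply Rabs_pos|apply (HM 0); lra]).
  assert (Hf := INR_fact_lt_0 (S N)).
  assert (Hinc : forall i, (i < N)%nat -> node N i < node N (S i)) by (intros; apply node_incr; auto).
  assert (Hle := incr_le (node N) N Hinc).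
  destruct (find_interval (node N) N t Hinc) as [[i [Hi Et]]|[m [Hm Et]]].
  { rewrite node_0, node_N; auto. }
  - subst t. rewrite rinterp_node; auto; [|lia]. rewrite Rminus_diag, Rabs_R0.
    apply Rmult_le_pos; [apply Rdiv_le_0_compat|apply Rabs_pos]; lra.
  - assert (Hom : omega N t <> 0).
    { apply rprod_nonzero. intros i Hi. destruct (Nat.le_gt_cases i m).
      assert (node N i <= node N m) by (apply Hle; lia). lra.
      assert (node N (S m) <= node N i) by (apply Hle; lia). lra. }
    set (lam := (G t - rinterp N G t) / omega N t).
    set (q := fun x => 1 * rinterp N G x + lam * omega N x).
    assert (Lq : PolyLC (S N) (1 * 0 + lam * 1) q).
    { apply PolyLC_lin. apply Poly_extLC, rinterp_poly. apply omega_poly. }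
    destruct (Poly_smooth _ _ (PolyLC_Poly _ _ _ Lq)) as [Sq _].
    set (z := fun i => if Nat.leb i m then node N i else if Nat.eqb i (S m) then t else node N (i - 1)).
    set (E := fun x => G x - q x).
    assert (Hz0 : z 0%nat = -1) by (unfold z; simpl; apply node_0).
    assert (HzN : z (S N) = 1).
    { unfold z. destruct (Nat.leb_spec (S N) m); [lia|]. destruct (Nat.eqb_spec (S N) (S m)); [lia|].
      replace (S N - 1)%nat with N by lia. apply node_N; auto. }
    assert (Hom0 : forall i, (i < S N)%nat -> omega N (node N i) = 0).
    { intros i Hi. apply (rprod_zero _ _ i); auto. ring. }
    destruct (gen_rolle N E z) as [xi [Hxi HD]].
    + intros i Hi. unfold z. destruct (Nat.leb_spec i m); destruct (Nat.leb_spec (S i) m).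
      apply Hinc; lia.
      replace i with m by lia. destruct (Nat.eqb_spec (S m) (S m)); [lra|lia].
      lia.
      destruct (Nat.eqb_spec i (S m)); destruct (Nat.eqb_spec (S i) (S m)); try lia.
      subst i. replace (S (S m) - 1)%nat with (S m) by lia. lra.
      replace (S i - 1)%nat with (S (i - 1)) by lia. apply Hinc; lia.
    + intros i Hi. unfold E, q, z. destruct (Nat.leb_spec i m).
      rewrite rinterp_node, Hom0; auto; try lia; ring.
      destruct (Nat.eqb_spec i (S m)). unfold lam. field; auto.
      rewrite rinterp_node, Hom0; auto; try lia; ring.
    + rewrite Hz0, HzN. unfold E. apply CC_ext with (fun x => G x + (-1) * q x); [intros; ring|lra|].
      apply CC_plus; auto. apply CC_scal. eapply CC_poly; [lra|]. eapply PolyLC_Poly; eauto.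
    + intros k w Hk Hw. rewrite Hz0, HzN in Hw. unfold E.
      apply ex_derive_n_minus.
      generalize (loc_in _ _ _ Hw). apply filter_imp. intros y Hy k' Hk'. apply Hd; auto; lia.
      apply filter_forall. intros y k' _. apply Sq.
    + rewrite Hz0, HzN in Hxi. unfold E in HD. rewrite Derive_n_minus in HD.
      rewrite (PolyLC_Dn _ _ _ Lq) in HD.
      assert (HGt : G t - rinterp N G t = lam * omega N t) by (unfold lam; field; auto).
      rewrite HGt, Rabs_mult. apply Rmult_le_compat_r; [apply Rabs_pos|].
      assert (lam = Derive_n G (S N) xi / INR (fact (S N))) by (field_simplify_eq; [lra|lra]).
      rewrite H, Rabs_div; [|lra]. rewrite (Rabs_pos_eq (INR _)); [|lra].
      unfold Rdiv. apply Rmult_le_compat_r. left; apply Rinv_0_lt_compat; auto. apply HM; auto.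
      generalize (loc_in _ _ _ Hxi). apply filter_imp. intros y Hy k' Hk'. apply Hd; auto; lia.
      apply filter_forall. intros y k' _. apply Sq.
Qed.

Lemma rprod_shift F m : rprod F (S m) = F 0%nat * rprod (fun i => F (S i)) m.
Proof. induction m; simpl in *; [ring|]. rewrite IHm. ring. Qed.
Lemma rprod_nonneg F m : (forall i, (i < m)%nat -> 0 <= F i) -> 0 <= rprod F m.
Proof. induction m; intros H; simpl; [lra|]. apply Rmult_le_pos; [apply IHm|apply H]; auto. Qed.
Lemma rprod_abs F m : Rabs (rprod F m) = rprod (fun i => Rabs (F i)) m.
Proof. induction m; simpl. apply Rabs_R1. rewrite Rabs_mult, IHm; auto. Qed.
Lemma rprod_scal c F m : rprod (fun i => c * F i) m = c ^ m * rprod F m.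
Proof. induction m; simpl; [ring|]. rewrite IHm; ring. Qed.
Lemma rprod_ext F G m : (forall i, (i < m)%nat -> F i = G i) -> rprod F m = rprod G m.
Proof. induction m; intros H; simpl; auto. rewrite IHm, H; auto. Qed.

Lemma rprod_abs_bound n : forall x, 0 <= x <= INR n -> rprod (fun i => Rabs (x - INR i)) (S n) <= INR (fact n).
Proof.
  induction n; intros x Hx.
  - simpl in *. replace x with 0 by lra. rewrite Rminus_0_r, Rabs_R0. lra.
  - assert (Hn := pos_INR n). rewrite S_INR in Hx.
    change (fact (S n)) with (S n * fact n)%nat. rewrite mult_INR, S_INR.
    assert (Hf := INR_fact_lt_0 n).
    destruct (Rle_dec x (INR n)).
    + change (rprod ?F (S (S n))) with (rprod F (S n) * F (S n)).
      assert (rprod (fun i => Rabs (x - INR i)) (S n) <= INR (fact n)) by (apply IHn; lra).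
      assert (Rabs (x - INR (S n)) <= INR n + 1) by (rewrite S_INR; unfold Rabs; destruct Rcase_abs; lra).
      rewrite Rmult_comm. apply Rmult_le_compat; auto. apply Rabs_pos.
      apply rprod_nonneg; intros; apply Rabs_pos.
    + destruct (Rle_dec 1 x).
      * rewrite rprod_shift.
        rewrite (rprod_ext _ (fun i => Rabs ((x - 1) - INR i))).
        assert (rprod (fun i => Rabs ((x - 1) - INR i)) (S n) <= INR (fact n)) by (apply IHn; lra).
        assert (Rabs (x - INR 0) <= INR n + 1) by (simpl; unfold Rabs; destruct Rcase_abs; lra).
        apply Rmult_le_compat; auto. apply Rabs_pos. apply rprod_nonneg; intros; apply Rabs_pos.
        intros i _. rewrite S_INR. f_equal. ring.
      * assert (n = 0%nat). { destruct n; auto. rewrite S_INR in n0. generalize (pos_INR n). lra. }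
        subst. simpl. rewrite Rminus_0_r. unfold Rabs; repeat destruct Rcase_abs; nra.
Qed.

Lemma omega_bound N t : (1 <= N)%nat -> -1 <= t <= 1 -> Rabs (omega N t) <= INR (fact N) * (2 / INR N) ^ (S N).
Proof.
  intros HN Ht. assert (HNp : 0 < INR N) by (apply lt_0_INR; lia).
  set (x := (t + 1) * INR N / 2).
  unfold omega. rewrite (rprod_ext _ (fun i => (2 / INR N) * (x - INR i))).
  rewrite rprod_scal, Rabs_mult, rprod_abs. rewrite (Rmult_comm (INR (fact N))).
  rewrite Rabs_pos_eq; [|apply pow_le; apply Rlt_le, Rdiv_lt_0_compat; lra].
  apply Rmult_le_compat_l. apply pow_le; apply Rlt_le, Rdiv_lt_0_compat; lra.
  apply rprod_abs_bound. unfold x. split. apply Rmult_le_pos; [|lra]; apply Rmult_le_pos; lra.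
  apply Rmult_le_reg_r with 2; [lra|]. unfold Rdiv. rewrite Rmult_assoc, Rinv_l; [|lra]. nra.
  intros i _. unfold x, node. field. lra.
Qed.

Record IPS (X : Type) := mkIPS {
  i_good : X -> Prop;
  i_add : X -> X -> X;
  i_scl : C -> X -> X;
  i_zero : X;
  i_ip : X -> X -> C;
  i_good_add : forall x y, i_good x -> i_good y -> i_good (i_add x y);
  i_good_scl : forall a x, i_good x -> i_good (i_scl a x);
  i_good_zero : i_good i_zero;
  i_ip_add : forall x y z, i_good x -> i_good y -> i_good z -> i_ip (i_add x y) z = Cplus (i_ip x z) (i_ip y z);
  i_ip_scl : forall a x z, i_good x -> i_good z -> i_ip (i_scl a x) z = Cmult a (i_ip x z);
  i_ip_zero : forall z, i_good z -> i_ip i_zero z = RtoC 0;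
  i_ip_sym : forall x y, i_good x -> i_good y -> i_ip x y = Cconj (i_ip y x);
  i_ip_pos : forall x, i_good x -> 0 <= fst (i_ip x x)
}.
Arguments i_good {X}. Arguments i_add {X}. Arguments i_scl {X}. Arguments i_zero {X}. Arguments i_ip {X}.
Arguments i_good_add {X}. Arguments i_good_scl {X}. Arguments i_good_zero {X}. Arguments i_ip_add {X}. Arguments i_ip_scl {X}. Arguments i_ip_zero {X}. Arguments i_ip_sym {X}. Arguments i_ip_pos {X}.

Section IPSTheory.
Context {X : Type} (IP : IPS X).
Notation good := (i_good IP). Notation add := (i_add IP). Notation scl := (i_scl IP). Notation ip := (i_ip IP).

Fixpoint vsum (F : nat -> X) (n : nat) : X :=
  match n with O => i_zero IP | S m => add (vsum F m) (F m) end.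
Definition nrm2 (x : X) : R := fst (ip x x).
Definition sub (x y : X) : X := add x (scl (RtoC (-1)) y).

Lemma good_vsum F n : (forall j, (j < n)%nat -> good (F j)) -> good (vsum F n).
Proof. induction n; intros H; simpl. apply i_good_zero. apply i_good_add; auto. Qed.
Lemma good_sub x y : good x -> good y -> good (sub x y).
Proof. intros; apply i_good_add; auto; apply i_good_scl; auto. Qed.

Lemma ip_vsum_l F n z : (forall j, (j < n)%nat -> good (F j)) -> good z -> ip (vsum F n) z = csum (fun j => ip (F j) z) n.
Proof.
  induction n; intros H Hz; simpl. apply i_ip_zero; auto.
  rewrite i_ip_add; auto. rewrite IHn; auto. apply good_vsum; auto.
Qed.
Lemma ip_add_r x y z : good x -> good y -> good z -> ip z (add x y) = Cplus (ip z x) (ip z y).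
Proof. intros. rewrite i_ip_sym, i_ip_add, (i_ip_sym IP x z), (i_ip_sym IP y z); auto; try apply i_good_add; auto.
  apply injective_projections; simpl; lra. Qed.
Lemma ip_scl_r a x z : good x -> good z -> ip z (scl a x) = Cmult (Cconj a) (ip z x).
Proof. intros. rewrite i_ip_sym, i_ip_scl, (i_ip_sym IP x z); auto; try apply i_good_scl; auto.
  apply injective_projections; simpl; lra. Qed.
Lemma ip_vsum_r F n z : (forall j, (j < n)%nat -> good (F j)) -> good z -> ip z (vsum F n) = csum (fun j => ip z (F j)) n.
Proof.
  intros H Hz. rewrite i_ip_sym; auto; [|apply good_vsum; auto]. rewrite ip_vsum_l, csum_conj; auto.
  apply csum_ext. intros; rewrite i_ip_sym, (i_ip_sym IP z); auto. apply injective_projections; simpl; lra.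
Qed.

Definition orthonormal (e : nat -> X) (m : nat) :=
  (forall i, (i < m)%nat -> good (e i)) /\
  (forall i j, (i < m)%nat -> (j < m)%nat -> ip (e i) (e j) = RtoC (if Nat.eqb i j then 1 else 0)).

Lemma coeff_vsum e m b i : orthonormal e m -> (i < m)%nat ->
  ip (vsum (fun j => scl (b j) (e j)) m) (e i) = b i.
Proof.
  intros [Hg Ho] Hi. rewrite ip_vsum_l; auto; [|intros; apply i_good_scl; auto].
  rewrite (csum_delta _ _ i); auto.
  rewrite i_ip_scl, Ho, Nat.eqb_refl; auto. apply injective_projections; simpl; lra.
  intros j Hj Hji. rewrite i_ip_scl, Ho; auto. destruct (Nat.eqb_spec j i); [lia|]. apply injective_projections; simpl; lra.
Qed.

Lemma Cmod2 (c : C) : Cmod c ^ 2 = fst c * fst c + snd c * snd c.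
Proof. unfold Cmod. rewrite pow2_sqrt. simpl; ring. nra. Qed.

Lemma nrm2_vsum e m b : orthonormal e m -> nrm2 (vsum (fun j => scl (b j) (e j)) m) = rsum (fun j => Cmod (b j) ^ 2) m.
Proof.
  intros Ho. destruct Ho as [Hg Ho'].
  assert (Hgs : forall j, (j < m)%nat -> good (scl (b j) (e j))) by (intros; apply i_good_scl; auto).
  unfold nrm2. rewrite ip_vsum_r; auto; [|apply good_vsum; auto].
  rewrite Re_csum. apply rsum_ext. intros j Hj. rewrite ip_scl_r; auto; [|apply good_vsum; auto].
  rewrite coeff_vsum; auto; [|split; auto]. rewrite Cmod2. simpl; ring.
Qed.

Lemma nrm2_add x y : good x -> good y -> nrm2 (add x y) = nrm2 x + 2 * fst (ip x y) + nrm2 y.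
Proof.
  intros. unfold nrm2. rewrite i_ip_add, !ip_add_r; auto; try apply i_good_add; auto.
  rewrite (i_ip_sym IP y x); auto. simpl. lra.
Qed.
Lemma nrm2_scl a x : good x -> nrm2 (scl (RtoC a) x) = a * a * nrm2 x.
Proof. intros. unfold nrm2. rewrite i_ip_scl, ip_scl_r; auto; try apply i_good_scl; auto. simpl.
  rewrite (i_ip_sym IP x x) at 2; auto. simpl. ring. Qed.
Lemma nrm2_pos x : good x -> 0 <= nrm2 x.
Proof. apply i_ip_pos. Qed.
Lemma nrm2_sub x y : good x -> good y -> nrm2 (sub x y) = nrm2 x - 2 * fst (ip x y) + nrm2 y.
Proof. intros. unfold sub. rewrite nrm2_add, nrm2_scl, ip_scl_r; auto; [|apply i_good_scl; auto]. simpl. ring. Qed.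

Lemma ips_CS x y : good x -> good y -> fst (ip x y) * fst (ip x y) <= nrm2 x * nrm2 y.
Proof.
  intros Hx Hy.
  assert (Q : forall l, 0 <= nrm2 x + 2 * l * fst (ip x y) + l * l * nrm2 y).
  { intros l. generalize (nrm2_pos _ (i_good_add IP _ _ Hx (i_good_scl IP (RtoC l) _ Hy))).
    rewrite nrm2_add, nrm2_scl, ip_scl_r; auto; [|apply i_good_scl; auto]. simpl. intros; nra. }
  set (A := nrm2 x) in *. set (B := fst (ip x y)) in *. set (Cc := nrm2 y) in *.
  assert (HA : 0 <= A) by (apply nrm2_pos; auto). assert (HC : 0 <= Cc) by (apply nrm2_pos; auto).
  destruct (Req_dec Cc 0) as [E|E].
  - destruct (Req_dec B 0) as [EB|EB]. rewrite EB; nra.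
    exfalso. specialize (Q (- (A + 1) / (2 * B))). rewrite E in Q.
    replace (A + 2 * (- (A + 1) / (2 * B)) * B + - (A + 1) / (2 * B) * (- (A + 1) / (2 * B)) * 0) with (-1) in Q by (field; auto). lra.
  - specialize (Q (- B / Cc)).
    replace (A + 2 * (- B / Cc) * B + - B / Cc * (- B / Cc) * Cc) with (A - B * B / Cc) in Q by (field; auto).
    assert (0 < Cc) by lra. apply Rmult_le_reg_r with (/ Cc). apply Rinv_0_lt_compat; auto.
    replace (A * Cc * / Cc) with A by (field; auto). unfold Rdiv in Q. lra.
Qed.

Lemma ips_triangle x y : good x -> good y -> sqrt (nrm2 (add x y)) <= sqrt (nrm2 x) + sqrt (nrm2 y).
Proof.
  intros Hx Hy. assert (HA := nrm2_pos _ Hx). assert (HC := nrm2_pos _ Hy).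
  assert (HS := nrm2_pos _ (i_good_add IP _ _ Hx Hy)).
  apply Rsqr_incr_0_var; [|apply Rplus_le_le_0_compat; apply sqrt_pos].
  unfold Rsqr. rewrite sqrt_sqrt; auto. rewrite nrm2_add; auto.
  replace ((sqrt (nrm2 x) + sqrt (nrm2 y)) * (sqrt (nrm2 x) + sqrt (nrm2 y))) with
    (sqrt (nrm2 x) * sqrt (nrm2 x) + 2 * (sqrt (nrm2 x) * sqrt (nrm2 y)) + sqrt (nrm2 y) * sqrt (nrm2 y)) by ring.
  rewrite !sqrt_sqrt; auto.
  assert (fst (ip x y) <= sqrt (nrm2 x) * sqrt (nrm2 y)).
  { rewrite <- sqrt_mult; auto. apply Rsqr_incr_0_var; [|apply sqrt_pos]. unfold Rsqr. rewrite sqrt_sqrt; [|nra].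
    apply ips_CS; auto. }
  lra.
Qed.

Lemma Bessel_sel x e m (d : nat -> bool) : good x -> orthonormal e m ->
  nrm2 (sub x (vsum (fun j => scl (if d j then ip x (e j) else RtoC 0) (e j)) m)) =
  nrm2 x - rsum (fun j => if d j then Cmod (ip x (e j)) ^ 2 else 0) m.
Proof.
  intros Hx Ho. set (b := fun j => if d j then ip x (e j) else RtoC 0).
  destruct Ho as [Hg Ho'].
  assert (Hgs : forall j, (j < m)%nat -> good (scl (b j) (e j))) by (intros; apply i_good_scl; auto).
  assert (Hy : good (vsum (fun j => scl (b j) (e j)) m)) by (apply good_vsum; auto).
  rewrite nrm2_sub; auto.
  rewrite nrm2_vsum; [|split; auto].
  rewrite ip_vsum_r; auto. rewrite Re_csum.
  assert (E1 : rsum (fun i => fst (ip x (scl (b i) (e i)))) m = rsum (fun j => if d j then Cmod (ip x (e j)) ^ 2 else 0) m).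
  { apply rsum_ext. intros i Hi. rewrite ip_scl_r; auto. unfold b. destruct (d i); [rewrite Cmod2; simpl; ring|simpl; ring]. }
  assert (E2 : rsum (fun j => Cmod (b j) ^ 2) m = rsum (fun j => if d j then Cmod (ip x (e j)) ^ 2 else 0) m).
  { apply rsum_ext. intros i Hi. unfold b. destruct (d i); auto. rewrite Cmod2; simpl; ring. }
  cbv beta. unfold b in E1, E2. rewrite E1, E2. ring.
Qed.

Lemma Bessel_all x e m : good x -> orthonormal e m -> rsum (fun j => Cmod (ip x (e j)) ^ 2) m <= nrm2 x.
Proof.
  intros Hx Ho. generalize (Bessel_sel x e m (fun _ => true) Hx Ho). simpl. intros E.
  assert (0 <= nrm2 (sub x (vsum (fun j => scl (ip x (e j)) (e j)) m))).
  { apply nrm2_pos, good_sub; auto. apply good_vsum; intros; apply i_good_scl; apply Ho; auto. }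
  lra.
Qed.
Lemma Bessel_le x e m (d : nat -> bool) : good x -> orthonormal e m ->
  nrm2 (sub x (vsum (fun j => scl (if d j then ip x (e j) else RtoC 0) (e j)) m)) <= nrm2 x.
Proof.
  intros Hx Ho. rewrite Bessel_sel; auto. assert (0 <= rsum (fun j => if d j then Cmod (ip x (e j)) ^ 2 else 0) m).
  apply rsum_ge0; intros; destruct (d i); [apply pow2_ge_0|lra]. lra.
Qed.
End IPSTheory.

Lemma vs_ip_add N (x y z : nat -> C) : True -> True -> True -> vdot N z (fun l => Cplus (x l) (y l)) = Cplus (vdot N z x) (vdot N z y).
Proof. intros. unfold vdot. rewrite <- csum_plus. apply csum_ext; intros. apply injective_projections; simpl; ring. Qed.
Lemma vs_ip_scl N a (x z : nat -> C) : True -> True -> vdot N z (fun l => Cmult a (x l)) = Cmult a (vdot N z x).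
Proof. intros. unfold vdot. rewrite <- csum_scal. apply csum_ext; intros. apply injective_projections; simpl; ring. Qed.
Lemma vs_ip_zero N (z : nat -> C) : True -> vdot N z (fun _ => RtoC 0) = RtoC 0.
Proof. intros. unfold vdot. transitivity (csum (fun _ => RtoC 0) (S N)); [|apply csum_zero]. apply csum_ext; intros. apply injective_projections; simpl; ring. Qed.
Lemma vs_ip_sym N (x y : nat -> C) : True -> True -> vdot N y x = Cconj (vdot N x y).
Proof. intros. unfold vdot. rewrite csum_conj. apply csum_ext; intros. apply injective_projections; simpl; ring. Qed.
Lemma vs_ip_pos N (x : nat -> C) : True -> 0 <= fst (vdot N x x).
Proof. intros. unfold vdot. rewrite Re_csum. apply rsum_ge0. intros; simpl. nra. Qed.

Definition VS (N : nat) : IPS (nat -> C) :=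
  mkIPS (nat -> C) (fun _ => True) (fun x y l => Cplus (x l) (y l)) (fun a x l => Cmult a (x l))
    (fun _ => RtoC 0) (fun x y => vdot N y x) (fun _ _ _ _ => I) (fun _ _ _ => I) I
    (fun x y z => vs_ip_add N x y z) (fun a x z => vs_ip_scl N a x z) (vs_ip_zero N)
    (fun x y => vs_ip_sym N x y) (vs_ip_pos N).

Lemma vnorm_nrm2 N c : vnorm N c = sqrt (nrm2 (VS N) c).
Proof. unfold vnorm, nrm2. unfold VS, i_ip. unfold vdot. rewrite Re_csum. f_equal. apply rsum_ext; intros.
  rewrite Cmod2. simpl; ring. Qed.

Definition goodf (h : R -> C) := CC (-1) 1 (fun t => fst (h t)) /\ CC (-1) 1 (fun t => snd (h t)).

Lemma CC_exRInt F : CC (-1) 1 F -> ex_RInt F (-1) 1.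
Proof.
  intros H. apply (ex_RInt_ext (fun t => F (clamp (-1) 1 t))).
  intros x Hx. rewrite Rmin_left, Rmax_right in Hx by lra. rewrite clamp_id; lra.
  apply (ex_RInt_continuous (V:=R_CompleteNormedModule)). intros; apply H.
Qed.
Lemma RInt_lin F G al be : CC (-1) 1 F -> CC (-1) 1 G ->
  RInt (fun t => al * F t + be * G t) (-1) 1 = al * RInt F (-1) 1 + be * RInt G (-1) 1.
Proof.
  intros HF HG. assert (E1 := CC_exRInt _ HF). assert (E2 := CC_exRInt _ HG).
  rewrite (RInt_plus (fun t => al * F t) (fun t => be * G t)).
  rewrite (RInt_scal F), (RInt_scal G); auto.
  apply (ex_RInt_scal F); auto. apply (ex_RInt_scal G); auto.
Qed.
Lemma RInt_ext_all (F G : R -> R) a b : (forall t, F t = G t) -> RInt F a b = RInt G a b.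
Proof. intros H. apply RInt_ext; auto. Qed.

Lemma goodf_prod_fst x z : goodf x -> goodf z -> CC (-1) 1 (fun t => fst (Cmult (x t) (Cconj (z t)))).
Proof. intros [A B] [C D]. apply CC_ext with (fun t => fst (x t) * fst (z t) + snd (x t) * snd (z t)).
  intros; simpl; ring. lra. apply CC_plus; apply CC_mult; auto. Qed.
Lemma goodf_prod_snd x z : goodf x -> goodf z -> CC (-1) 1 (fun t => snd (Cmult (x t) (Cconj (z t)))).
Proof. intros [A B] [C D]. apply CC_ext with (fun t => snd (x t) * fst (z t) + (-1) * (fst (x t) * snd (z t))).
  intros; simpl; ring. lra. apply CC_plus; [|apply CC_scal]; apply CC_mult; auto. Qed.

Notation PF x z := (fun t => fst (Cmult (x t) (Cconj (z t)))).
Notation PS x z := (fun t => snd (Cmult (x t) (Cconj (z t)))).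

Lemma fs_good_add x y : goodf x -> goodf y -> goodf (fun t => Cplus (x t) (y t)).
Proof. intros [A B] [C D]. split; simpl; apply CC_plus; auto. Qed.
Lemma fs_good_scl a x : goodf x -> goodf (fun t => Cmult a (x t)).
Proof. intros [A B]. split; simpl.
  apply CC_ext with (fun t => fst a * fst (x t) + (- snd a) * snd (x t)); [intros; simpl; ring|lra|apply CC_plus; apply CC_scal; auto].
  apply CC_ext with (fun t => fst a * snd (x t) + snd a * fst (x t)); [intros; simpl; ring|lra|apply CC_plus; apply CC_scal; auto].
Qed.
Lemma fs_good_zero : goodf (fun _ => RtoC 0).
Proof. split; simpl; apply CC_of_cont; try lra; intros; apply continuous_const. Qed.

Lemma fs_ip_add x y z : goodf x -> goodf y -> goodf z -> L2dot (fun t => Cplus (x t) (y t)) z = Cplus (L2dot x z) (L2dot y z).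
Proof.
  intros Hx Hy Hz. unfold L2dot, cint_Lambda. apply injective_projections; simpl.
  - transitivity (RInt (fun t => 1 * PF x z t + 1 * PF y z t) (-1) 1). apply RInt_ext_all; intros; simpl; ring.
    rewrite RInt_lin; try (apply goodf_prod_fst; auto). simpl; ring.
  - transitivity (RInt (fun t => 1 * PS x z t + 1 * PS y z t) (-1) 1). apply RInt_ext_all; intros; simpl; ring.
    rewrite RInt_lin; try (apply goodf_prod_snd; auto). simpl; ring.
Qed.
Lemma fs_ip_scl a x z : goodf x -> goodf z -> L2dot (fun t => Cmult a (x t)) z = Cmult a (L2dot x z).
Proof.
  intros Hx Hz. unfold L2dot, cint_Lambda. apply injective_projections; simpl.
  - transitivity (RInt (fun t => fst a * PF x z t + (- snd a) * PS x z t) (-1) 1). apply RInt_ext_all; intros; simpl; ring.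
    rewrite RInt_lin; [simpl; ring|apply goodf_prod_fst; auto|apply goodf_prod_snd; auto].
  - transitivity (RInt (fun t => fst a * PS x z t + snd a * PF x z t) (-1) 1). apply RInt_ext_all; intros; simpl; ring.
    rewrite RInt_lin; [simpl; ring|apply goodf_prod_snd; auto|apply goodf_prod_fst; auto].
Qed.
Lemma RInt_zero a b : RInt (fun _ => 0) a b = 0.
Proof. rewrite RInt_const. unfold scal; simpl; unfold mult; simpl; ring. Qed.
Lemma fs_ip_zero z : goodf z -> L2dot (fun _ => RtoC 0) z = RtoC 0.
Proof.
  intros Hz. unfold L2dot, cint_Lambda. apply injective_projections; simpl.
  - transitivity (RInt (fun _ => 0) (-1) 1). apply RInt_ext_all; intros; simpl; ring. apply RInt_zero.
  - transitivity (RInt (fun _ => 0) (-1) 1). apply RInt_ext_all; intros; simpl; ring. apply RInt_zero.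
Qed.
Lemma fs_ip_sym x y : goodf x -> goodf y -> L2dot x y = Cconj (L2dot y x).
Proof.
  intros Hx Hy. unfold L2dot, cint_Lambda. apply injective_projections; simpl.
  - apply RInt_ext_all; intros; simpl; ring.
  - transitivity (RInt (fun t => (-1) * PS y x t + 0 * PS y x t) (-1) 1). apply RInt_ext_all; intros; simpl; ring.
    rewrite RInt_lin; try (apply goodf_prod_snd; auto). simpl; ring.
Qed.
Lemma fs_ip_pos x : goodf x -> 0 <= fst (L2dot x x).
Proof.
  intros Hx. unfold L2dot, cint_Lambda. simpl. apply RInt_ge_0. lra. apply CC_exRInt, goodf_prod_fst; auto.
  intros; simpl; nra.
Qed.

Definition FS : IPS (R -> C) :=
  mkIPS (R -> C) goodf (fun x y t => Cplus (x t) (y t)) (fun a x t => Cmult a (x t))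
    (fun _ => RtoC 0) L2dot fs_good_add fs_good_scl fs_good_zero fs_ip_add fs_ip_scl fs_ip_zero fs_ip_sym fs_ip_pos.

Lemma vsum_FS F n t : vsum FS F n t = csum (fun j => F j t) n.
Proof. induction n; simpl; auto. rewrite IHn; auto. Qed.

Lemma L2norm_nrm2 h : L2norm h = sqrt (nrm2 FS h).
Proof. unfold L2norm, nrm2. unfold FS. cbn [i_ip]. unfold L2dot, cint_Lambda. cbn [fst]. f_equal. apply RInt_ext_all.
  intros; rewrite Cmod2; simpl; ring. Qed.
Lemma L2norm_ext h h' : (forall t, -1 <= t <= 1 -> h t = h' t) -> L2norm h = L2norm h'.
Proof. intros H. unfold L2norm. f_equal. apply RInt_ext. intros x Hx. rewrite Rmin_left, Rmax_right in Hx by lra. rewrite H; auto; lra. Qed.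
Lemma L2dot_ext_l h h' z : (forall t, -1 <= t <= 1 -> h t = h' t) -> L2dot h z = L2dot h' z.
Proof. intros H. unfold L2dot, cint_Lambda. f_equal; apply RInt_ext; intros x Hx; rewrite Rmin_left, Rmax_right in Hx by lra; rewrite H; auto; lra. Qed.
Lemma goodf_ext h h' : (forall t, -1 <= t <= 1 -> h t = h' t) -> goodf h -> goodf h'.
Proof. intros E [A B]. split.
  apply CC_ext with (fun t => fst (h t)); auto; [|lra]. intros; rewrite E; auto.
  apply CC_ext with (fun t => snd (h t)); auto; [|lra]. intros; rewrite E; auto. Qed.

Lemma legT_Poly T N l : 0 < T -> (l <= N)%nat -> Poly N (legT T l).
Proof. intros HT Hl. destruct (legT_poly T l HT) as [c [_ L]]. eapply Poly_mono; eauto. eapply PolyLC_Poly; eauto. Qed.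

Lemma synth_good N T c : 0 < T -> goodf (synth N T c).
Proof.
  intros HT.
  assert (E : forall t, synth N T c t = synth N T (fun l => (fst (c l), snd (c l))) t).
  { intros; unfold synth; apply csum_ext; intros; destruct (c i); auto. }
  split.
  - apply CC_ext with (fun t => rsum (fun l => fst (c l) * legT T l t) (S N)); [|lra|].
    intros; rewrite E, synth_real; auto.
    eapply CC_poly; [lra|]. apply (Poly_rsum N (fun l t => fst (c l) * legT T l t)). intros j Hj.
    apply Poly_ext with (fun t => fst (c j) * legT T j t + 0 * legT T j t); [intros; ring|]. apply Poly_lin; apply legT_Poly; auto; lia.
  - apply CC_ext with (fun t => rsum (fun l => snd (c l) * legT T l t) (S N)); [|lra|].
    intros; rewrite E, synth_real; auto.
    eapply CC_poly; [lra|]. apply (Poly_rsum N (fun l t => snd (c l) * legT T l t)). intros j Hj.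
    apply Poly_ext with (fun t => snd (c j) * legT T j t + 0 * legT T j t); [intros; ring|]. apply Poly_lin; apply legT_Poly; auto; lia.
Qed.

Section SVD.
Variables (N : nat) (T : R) (r : nat) (sig : nat -> R) (v : nat -> nat -> C) (u : nat -> R -> C).
Hypothesis HT : 0 < T.
Hypothesis HS : is_SVD N T r sig v u.

Lemma svd_v_on : orthonormal (VS N) v r.
Proof. destruct HS as [_ [Hv _]]. split. intros; exact I. intros i j Hi Hj. simpl. rewrite Hv; auto.
  rewrite Nat.eqb_sym; auto. Qed.

Lemma svd_synth_v j t : (j < r)%nat -> -1 <= t <= 1 -> synth N T (v j) t = Cmult (RtoC (sig j)) (u j t).
Proof.
  intros Hj Ht. destruct HS as [_ [Hv [_ Hid]]]. rewrite Hid; auto.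
  rewrite (csum_delta _ _ j); auto. rewrite Hv, Nat.eqb_refl; auto. apply injective_projections; simpl; ring.
  intros i Hi Hij. rewrite Hv; auto. destruct (Nat.eqb_spec i j); [lia|]. apply injective_projections; simpl; ring.
Qed.

Lemma svd_u_good j : (j < r)%nat -> goodf (u j).
Proof.
  intros Hj. destruct HS as [Hs _]. assert (0 < sig j) by auto.
  apply goodf_ext with (fun t => Cmult (RtoC (/ sig j)) (synth N T (v j) t)).
  intros t Ht. rewrite svd_synth_v; auto. apply injective_projections; simpl; field; lra.
  apply fs_good_scl, synth_good; auto.
Qed.

Lemma svd_u_on : orthonormal FS u r.
Proof. destruct HS as [_ [_ [Hu _]]]. split. intros; apply svd_u_good; auto. intros; simpl; apply Hu; auto. Qed.

Lemma svd_synth_vsum c t : -1 <= t <= 1 ->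
  synth N T c t = vsum FS (fun j => i_scl FS (Cmult (RtoC (sig j)) (vdot N (v j) c)) (u j)) r t.
Proof.
  intros Ht. destruct HS as [_ [_ [_ Hid]]]. rewrite Hid, vsum_FS; auto. apply csum_ext; intros.
  simpl. apply injective_projections; simpl; ring.
Qed.

Lemma svd_dot_synth c j : (j < r)%nat -> L2dot (synth N T c) (u j) = Cmult (RtoC (sig j)) (vdot N (v j) c).
Proof.
  intros Hj. rewrite (L2dot_ext_l _ (vsum FS (fun j => i_scl FS (Cmult (RtoC (sig j)) (vdot N (v j) c)) (u j)) r)).
  apply (coeff_vsum FS u r (fun j => Cmult (RtoC (sig j)) (vdot N (v j) c)) j svd_u_on Hj).
  intros; apply svd_synth_vsum; auto.
Qed.

Lemma rsum_comb F G H K n : (forall i, (i < n)%nat -> F i = G i + H i - K i) -> rsum F n = rsum G n + rsum H n - rsum K n.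
Proof. intros E. rewrite (rsum_ext _ (fun i => G i + H i + (-1) * K i)); [|intros; rewrite E; auto; ring].
  rewrite !rsum_plus, rsum_scal. ring. Qed.

Lemma tsvd_bound eps g c : 0 < eps -> goodf g ->
  L2norm (fun t => Cminus (g t) (TSVD N T eps r sig v u g t)) <=
  L2norm (fun t => Cminus (g t) (synth N T c t)) + eps * vnorm N c.
Proof.
  intros He Hg. destruct HS as [Hsig _].
  set (d := fun j => if Rlt_dec eps (sig j) then true else false).
  set (z := fun t => Cminus (g t) (synth N T c t)).
  assert (Hz : goodf z).
  { apply goodf_ext with (fun t => Cplus (g t) (Cmult (RtoC (-1)) (synth N T c t))).
    intros; unfold z; apply injective_projections; simpl; ring.
    apply fs_good_add; auto. apply fs_good_scl, synth_good; auto. }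
  assert (Hu := svd_u_on). assert (Hug : forall j, (j < r)%nat -> goodf (u j)) by (intros; apply svd_u_good; auto).
  set (w1 := sub FS z (vsum FS (fun j => i_scl FS (if d j then L2dot z (u j) else RtoC 0) (u j)) r)).
  set (bb := fun j => if d j then RtoC 0 else Cmult (RtoC (sig j)) (vdot N (v j) c)).
  set (w2 := vsum FS (fun j => i_scl FS (bb j) (u j)) r).
  assert (Hw1 : goodf w1). { apply (good_sub FS); auto. apply (good_vsum FS). intros; apply fs_good_scl; auto. }
  assert (Hw2 : goodf w2). { apply (good_vsum FS). intros; apply fs_good_scl; auto. }
  assert (Hgz : forall j, (j < r)%nat -> L2dot g (u j) = Cplus (L2dot z (u j)) (Cmult (RtoC (sig j)) (vdot N (v j) c))).
  { intros j Hj. rewrite <- svd_dot_synth; auto. rewrite <- fs_ip_add; auto; [|apply synth_good; auto].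
    apply L2dot_ext_l. intros; unfold z; apply injective_projections; simpl; ring. }
  assert (Eq : forall t, -1 <= t <= 1 -> Cminus (g t) (TSVD N T eps r sig v u g t) = i_add FS w1 w2 t).
  { intros t Ht. unfold w1, w2, sub. simpl. rewrite !vsum_FS. unfold TSVD.
    assert (Ez : z t = Cminus (g t) (csum (fun j => Cmult (Cmult (RtoC (sig j)) (vdot N (v j) c)) (u j t)) r)).
    { unfold z. rewrite svd_synth_vsum, vsum_FS; auto. }
    rewrite Ez. apply injective_projections; simpl; rewrite ?Re_csum, ?Im_csum.
    - match goal with |- ?L = ?R => assert (L - R = 0); [|lra] end.
      rewrite (rsum_comb (fun i => fst (if Rlt_dec eps (sig i) then Cmult (RtoC (/ sig i)) (Cmult (L2dot g (u i)) (synth N T (v i) t)) else RtoC 0))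
        (fun i => fst (Cmult (if d i then L2dot z (u i) else RtoC 0) (u i t)))
        (fun i => fst (Cmult (Cmult (RtoC (sig i)) (vdot N (v i) c)) (u i t)))
        (fun i => fst (Cmult (bb i) (u i t)))).
      simpl. ring.
      intros i Hi. unfold bb, d. rewrite svd_synth_v; auto. destruct (Rlt_dec eps (sig i)).
      rewrite Hgz; auto. generalize (L2dot z (u i)) (vdot N (v i) c) (u i t); intros A B U. simpl. field. apply Rgt_not_eq, Hsig; auto. simpl; ring.
    - match goal with |- ?L = ?R => assert (L - R = 0); [|lra] end.
      rewrite (rsum_comb (fun i => snd (if Rlt_dec eps (sig i) then Cmult (RtoC (/ sig i)) (Cmult (L2dot g (u i)) (synth N T (v i) t)) else RtoC 0))
        (fun i => snd (Cmult (if d i then L2dot z (u i) else RtoC 0) (u i t)))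
        (fun i => snd (Cmult (Cmult (RtoC (sig i)) (vdot N (v i) c)) (u i t)))
        (fun i => snd (Cmult (bb i) (u i t)))).
      simpl. ring.
      intros i Hi. unfold bb, d. rewrite svd_synth_v; auto. destruct (Rlt_dec eps (sig i)).
      rewrite Hgz; auto. generalize (L2dot z (u i)) (vdot N (v i) c) (u i t); intros A B U. simpl. field. apply Rgt_not_eq, Hsig; auto. simpl; ring. }
  rewrite (L2norm_ext _ _ Eq). rewrite L2norm_nrm2.
  eapply Rle_trans. apply (ips_triangle FS); auto.
  apply Rplus_le_compat.
  - rewrite L2norm_nrm2. apply sqrt_le_1_alt. unfold w1. apply Bessel_le; auto.
  - rewrite vnorm_nrm2. rewrite <- (sqrt_square eps) at 1; [|lra]. rewrite <- sqrt_mult_alt; [|nra].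
    apply sqrt_le_1_alt. unfold w2. rewrite nrm2_vsum; auto.
    eapply Rle_trans; [|apply Rmult_le_compat_l; [nra|apply (Bessel_all (VS N) c v r I (svd_v_on))]].
    rewrite <- rsum_scal. apply rsum_le. intros j Hj. unfold bb, d. simpl.
    destruct (Rlt_dec eps (sig j)).
    + rewrite Cmod_0. simpl. rewrite Rmult_0_l. apply Rmult_le_pos; [nra|apply pow2_ge_0].
    + rewrite Cmod_mult, Cmod_R, Rabs_pos_eq; [|apply Rlt_le, Hsig; auto].
      assert (0 < sig j) by auto. assert (sig j <= eps) by lra. assert (0 <= Cmod (vdot N (v j) c)) by apply Cmod_ge_0.
      assert (Hs2 : sig j * sig j <= eps * eps) by nra. generalize (Cmod (vdot N (v j) c)) H1; intros m Hm. assert (0 <= m * m) by nra. simpl. rewrite !Rmult_1_r. replace (sig j * m * (sig j * m)) with ((sig j * sig j) * (m * m)) by ring. apply Rmult_le_compat_r; auto.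
Qed.
End SVD.

Lemma ap_mono ap K : (forall k, (1 <= k <= K)%nat -> ap (k - 1)%nat < ap k) ->
  forall i j, (i <= j <= K)%nat -> ap i <= ap j.
Proof. intros H. apply incr_le. intros i Hi. specialize (H (S i) ltac:(lia)). simpl in H. rewrite Nat.sub_0_r in H. auto. Qed.

Lemma hI_ge ap K k : (1 <= k <= K)%nat -> ap k - ap (k - 1)%nat <= hI ap K.
Proof.
  induction K; intros Hk; [lia|]. destruct K.
  - replace k with 1%nat by lia. simpl. lra.
  - change (hI ap (S (S K))) with (Rmax (hI ap (S K)) (ap (S (S K)) - ap (S K))).
    destruct (Nat.eq_dec k (S (S K))). subst. replace (S (S K) - 1)%nat with (S K) by lia. apply Rmax_r.
    eapply Rle_trans; [apply IHK; lia|apply Rmax_l].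
Qed.

Lemma seg_index_spec ap K : (forall k, (1 <= k <= K)%nat -> ap (k - 1)%nat < ap k) ->
  forall k x, (1 <= k <= K)%nat -> ap (k - 1)%nat < x <= ap k -> seg_index ap K x = k.
Proof.
  intros H. assert (Hm := ap_mono ap K H). induction K; intros k x Hk Hx; [lia|]. destruct K.
  - simpl. lia.
  - change (seg_index ap (S (S K)) x) with (if Rle_dec x (ap (S K)) then seg_index ap (S K) x else S (S K)).
    destruct (Rle_dec x (ap (S K))).
    + apply IHK. intros; apply H; lia. apply ap_mono; intros; apply H; lia.
      destruct (Nat.eq_dec k (S (S K))); [|lia]. subst. replace (S (S K) - 1)%nat with (S K) in Hx by lia. lra.
      lra.
    + destruct (Nat.eq_dec k (S (S K))); auto. exfalso. assert (ap k <= ap (S K)) by (apply Hm; lia). lra.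
Qed.

Lemma CC_exRInt_gen a b F : a <= b -> CC a b F -> ex_RInt F a b.
Proof.
  intros Hab H. apply (ex_RInt_ext (fun t => F (clamp a b t))).
  intros x Hx. rewrite Rmin_left, Rmax_right in Hx by lra. rewrite clamp_id; lra.
  apply (ex_RInt_continuous (V:=R_CompleteNormedModule)). intros; apply H.
Qed.

Lemma cont_affine (c s : R) w : continuous (fun t => c + s * t) w.
Proof. apply (ex_derive_continuous (K:=R_AbsRing) (V:=R_NormedModule)). auto_derive; auto. Qed.

Lemma CC_affine a b al be F c s : a <= b -> al <= be -> 0 <= s -> a <= c + s * (-1) -> c + s * 1 <= b ->
  CC a b F -> CC (-1) 1 (fun t => F (c + s * t)).
Proof.
  intros Hab Hab' Hs H1 H2 HF w.
  apply continuous_ext with (fun y => (fun z => F (clamp a b z)) (c + s * clamp (-1) 1 y)).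
  intros y. f_equal. apply clamp_id. generalize (clamp_in (-1) 1 y ltac:(lra)). nra.
  apply (continuous_comp (fun y => c + s * clamp (-1) 1 y) (fun z => F (clamp a b z))); [|apply HF].
  apply (continuous_comp (clamp (-1) 1) (fun t => c + s * t)). apply clamp_cont; lra. apply cont_affine.
Qed.

Lemma Rabs_fst_Cmod (z : C) : Rabs (fst z) <= Cmod z.
Proof. unfold Cmod. rewrite <- sqrt_Rsqr_abs. apply sqrt_le_1_alt. unfold Rsqr. simpl. nra. Qed.
Lemma Rabs_snd_Cmod (z : C) : Rabs (snd z) <= Cmod z.
Proof. unfold Cmod. rewrite <- sqrt_Rsqr_abs. apply sqrt_le_1_alt. unfold Rsqr. simpl. nra. Qed.
Lemma Cmod_le_sum (z : C) : Cmod z <= Rabs (fst z) + Rabs (snd z).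
Proof.
  unfold Cmod. apply Rsqr_incr_0_var; [|apply Rplus_le_le_0_compat; apply Rabs_pos].
  unfold Rsqr. rewrite sqrt_sqrt; [|nra]. simpl.
  assert (0 <= Rabs (fst z) * Rabs (snd z)) by (apply Rmult_le_pos; apply Rabs_pos).
  assert (E1 : fst z * fst z = Rabs (fst z) * Rabs (fst z)) by (rewrite <- Rabs_mult, Rabs_pos_eq; nra).
  assert (E2 : snd z * snd z = Rabs (snd z) * Rabs (snd z)) by (rewrite <- Rabs_mult, Rabs_pos_eq; nra).
  nra.
Qed.

Lemma comp_derive F c s a b n x : (forall k y, (k <= n)%nat -> a < y < b -> ex_derive_n F k y) ->
  a < c + s * x < b ->
  (forall k, (k <= n)%nat -> ex_derive_n (fun t => F (c + s * t)) k x) /\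
  Derive_n (fun t => F (c + s * t)) n x = s ^ n * Derive_n F n (c + s * x).
Proof.
  intros HD Hx. set (H := fun y => F (y + c)).
  assert (Eq : forall t, F (c + s * t) = H (s * t)) by (intros; unfold H; f_equal; ring).
  assert (Loc : forall m, (m <= n)%nat -> locally (s * x) (fun x0 => forall k, (k <= m)%nat -> ex_derive_n H k x0)).
  { intros m Hm. generalize (loc_in (a - c) (b - c) (s * x) ltac:(lra)). apply filter_imp.
    intros y Hy k Hk. apply ex_derive_n_comp_trans. apply HD; [lia|lra]. }
  split.
  - intros k Hk. apply (ex_derive_n_ext (fun t => H (s * t))); [intros; rewrite Eq; auto|].
    apply ex_derive_n_comp_scal. apply Loc; auto.
  - rewrite (Derive_n_ext _ (fun t => H (s * t))); auto.
    rewrite Derive_n_comp_scal; [|apply Loc; auto]. unfold H. rewrite Derive_n_comp_trans. f_equal. f_equal. ring.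
Qed.

Lemma synth_poly N T c : 0 < T -> Poly N (fun t => fst (synth N T c t)) /\ Poly N (fun t => snd (synth N T c t)).
Proof.
  intros HT.
  assert (E : forall t, synth N T c t = synth N T (fun l => (fst (c l), snd (c l))) t).
  { intros; unfold synth; apply csum_ext; intros; destruct (c i); auto. }
  split.
  - apply Poly_ext with (fun t => rsum (fun l => fst (c l) * legT T l t) (S N)).
    intros; rewrite E, synth_real; auto.
    apply (Poly_rsum N (fun l t => fst (c l) * legT T l t)). intros j Hj.
    apply Poly_ext with (fun t => fst (c j) * legT T j t + 0 * legT T j t); [intros; ring|]. apply Poly_lin; apply legT_Poly; auto; lia.
  - apply Poly_ext with (fun t => rsum (fun l => snd (c l) * legT T l t) (S N)).
    intros; rewrite E, synth_real; auto.
    apply (Poly_rsum N (fun l t => snd (c l) * legT T l t)). intros j Hj.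
    apply Poly_ext with (fun t => snd (c j) * legT T j t + 0 * legT T j t); [intros; ring|]. apply Poly_lin; apply legT_Poly; auto; lia.
Qed.

Lemma tsvd_poly N T eps r sig v u g : 0 < T ->
  Poly N (fun t => fst (TSVD N T eps r sig v u g t)) /\ Poly N (fun t => snd (TSVD N T eps r sig v u g t)).
Proof.
  intros HT. unfold TSVD. split.
  - apply Poly_ext with (fun t => rsum (fun j => fst (if Rlt_dec eps (sig j) then Cmult (RtoC (/ sig j)) (Cmult (L2dot g (u j)) (synth N T (v j) t)) else RtoC 0)) r).
    intros; rewrite Re_csum; auto.
    apply (Poly_rsum N (fun j t => fst (if Rlt_dec eps (sig j) then Cmult (RtoC (/ sig j)) (Cmult (L2dot g (u j)) (synth N T (v j) t)) else RtoC 0))).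
    intros j Hj. destruct (Rlt_dec eps (sig j)).
    + destruct (synth_poly N T (v j) HT) as [P1 P2]. set (X := Cmult (RtoC (/ sig j)) (L2dot g (u j))).
      apply Poly_ext with (fun t => fst X * fst (synth N T (v j) t) + (- snd X) * snd (synth N T (v j) t)).
      intros; unfold X; simpl; ring. apply Poly_lin; auto.
    + simpl. eapply Poly_mono; [|apply Poly_const]. lia.
  - apply Poly_ext with (fun t => rsum (fun j => snd (if Rlt_dec eps (sig j) then Cmult (RtoC (/ sig j)) (Cmult (L2dot g (u j)) (synth N T (v j) t)) else RtoC 0)) r).
    intros; rewrite Im_csum; auto.
    apply (Poly_rsum N (fun j t => snd (if Rlt_dec eps (sig j) then Cmult (RtoC (/ sig j)) (Cmult (L2dot g (u j)) (synth N T (v j) t)) else RtoC 0))).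
    intros j Hj. destruct (Rlt_dec eps (sig j)).
    + destruct (synth_poly N T (v j) HT) as [P1 P2]. set (X := Cmult (RtoC (/ sig j)) (L2dot g (u j))).
      apply Poly_ext with (fun t => snd X * fst (synth N T (v j) t) + fst X * snd (synth N T (v j) t)).
      intros; unfold X; simpl; ring. apply Poly_lin; auto.
    + simpl. eapply Poly_mono; [|apply Poly_const]. lia.
Qed.

Lemma interp_good N g : goodf (interpN N g).
Proof. split.
  apply CC_ext with (rinterp N (fun x => fst (g x))); [intros; rewrite interpN_re; auto|lra|eapply CC_poly; [lra|apply rinterp_poly]].
  apply CC_ext with (rinterp N (fun x => snd (g x))); [intros; rewrite interpN_im; auto|lra|eapply CC_poly; [lra|apply rinterp_poly]].
Qed.

Lemma interp_synth N T g : 0 < T -> exists cc, forall t, interpN N g t = synth N T cc t.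
Proof.
  intros HT. destruct (legT_span T N _ HT (rinterp_poly N (fun x => fst (g x)))) as [cr Hr].
  destruct (legT_span T N _ HT (rinterp_poly N (fun x => snd (g x)))) as [ci Hi].
  exists (fun l => (cr l, ci l)). intros t. rewrite synth_real. apply injective_projections; cbn [fst snd].
  rewrite interpN_re; auto. rewrite interpN_im; auto.
Qed.

Lemma Cmod2_CC h : goodf h -> CC (-1) 1 (fun t => Cmod (h t) ^ 2).
Proof. intros Hh. apply CC_ext with (fun t => fst (Cmult (h t) (Cconj (h t)))).
  intros; rewrite Cmod2; simpl; ring. lra. apply goodf_prod_fst; auto. Qed.

Lemma L2norm_sq h : goodf h -> L2norm h ^ 2 = RInt (fun t => Cmod (h t) ^ 2) (-1) 1.
Proof. intros Hh. unfold L2norm. rewrite pow2_sqrt; auto. apply RInt_ge_0. lra. apply CC_exRInt, Cmod2_CC; auto.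
  intros; apply pow2_ge_0. Qed.

Section Main.
Variables (a b : R) (K : nat) (ap : nat -> R) (N : nat) (T eps Cf : R) (f : R -> C)
  (r : nat) (sig : nat -> R) (v : nat -> nat -> C) (u : nat -> R -> C).
Hypotheses (HK : (1 <= K)%nat) (Ha : ap 0%nat = a) (Hb : ap K = b)
  (Hinc : forall k, (1 <= k <= K)%nat -> ap (k - 1)%nat < ap k)
  (HT : 1 < T) (He : 0 < eps) (HN : (1 <= N)%nat)
  (Hf : Cm_closed_C (N + 1) a b f)
  (HCf : forall x, a < x < b -> Cmod (DeriveC_n f (N + 1) x) <= Cf)
  (HS : is_SVD N T r sig v u).

Lemma M_mono i j : (i <= j <= K)%nat -> ap i <= ap j.
Proof. apply ap_mono; auto. Qed.
Lemma M_ab : a < b.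
Proof. rewrite <- Ha, <- Hb. apply Rlt_le_trans with (ap 1%nat). generalize (Hinc 1%nat ltac:(lia)); simpl; auto.
  apply M_mono; lia. Qed.
Lemma M_range i : (i <= K)%nat -> a <= ap i <= b.
Proof. intros. rewrite <- Ha, <- Hb. split; apply M_mono; lia. Qed.
Lemma M_Cf : 0 <= Cf.
Proof. assert (H := M_ab). eapply Rle_trans; [apply Cmod_ge_0|apply (HCf ((a + b) / 2)); lra]. Qed.

Definition Fre := fun y => fst (f y).
Definition Fim := fun y => snd (f y).
Lemma M_CCre : CC a b Fre.
Proof. destruct Hf as [[H _] _]. apply CC_within; [generalize M_ab; lra|]. auto. Qed.
Lemma M_CCim : CC a b Fim.
Proof. destruct Hf as [_ [H _]]. apply CC_within; [generalize M_ab; lra|]. auto. Qed.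
Lemma M_dre k y : (k <= S N)%nat -> a < y < b -> ex_derive_n Fre k y.
Proof. destruct Hf as [[_ [H _]] _]. intros; apply H; auto; lia. Qed.
Lemma M_dim k y : (k <= S N)%nat -> a < y < b -> ex_derive_n Fim k y.
Proof. destruct Hf as [_ [_ [H _]]]. intros; apply H; auto; lia. Qed.
Lemma M_bre y : a < y < b -> Rabs (Derive_n Fre (S N) y) <= Cf.
Proof. intros Hy. eapply Rle_trans; [|apply (HCf y Hy)]. unfold DeriveC_n. replace (N + 1)%nat with (S N) by lia.
  apply (Rabs_fst_Cmod (Derive_n Fre (S N) y, Derive_n Fim (S N) y)). Qed.
Lemma M_bim y : a < y < b -> Rabs (Derive_n Fim (S N) y) <= Cf.
Proof. intros Hy. eapply Rle_trans; [|apply (HCf y Hy)]. unfold DeriveC_n. replace (N + 1)%nat with (S N) by lia.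
  apply (Rabs_snd_Cmod (Derive_n Fre (S N) y, Derive_n Fim (S N) y)). Qed.

Section Piece.
Variable k : nat.
Hypothesis Hk : (1 <= k <= K)%nat.
Let c := ck ap k.
Let s := sk ap k.
Lemma P_s : 0 < s.
Proof. unfold s, sk. generalize (Hinc k Hk). lra. Qed.
Lemma P_lo : c + s * (-1) = ap (k - 1)%nat.
Proof. unfold c, s, ck, sk. field. Qed.
Lemma P_hi : c + s * 1 = ap k.
Proof. unfold c, s, ck, sk. field. Qed.
Lemma P_in : a <= ap (k - 1)%nat /\ ap k <= b.
Proof. split; [apply M_range; lia|apply M_range; lia]. Qed.
Lemma P_inner x : -1 < x < 1 -> a < c + s * x < b.
Proof. intros Hx. generalize P_lo P_hi P_in P_s; intros. nra. Qed.
Lemma P_2s : 2 * s <= hI ap K.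
Proof. unfold s, sk. generalize (hI_ge ap K k Hk). lra. Qed.

Lemma P_CC (F : R -> R) : CC a b F -> CC (-1) 1 (fun t => F (c + s * t)).
Proof. intros HF. generalize P_lo P_hi P_in P_s M_ab; intros.
  apply (CC_affine a b (-1) 1); auto; lra. Qed.

Lemma P_good : goodf (gk f ap k).
Proof. split; [apply (P_CC Fre), M_CCre|apply (P_CC Fim), M_CCim]. Qed.

Lemma P_err1 (F : R -> R) t : (forall j y, (j <= S N)%nat -> a < y < b -> ex_derive_n F j y) ->
  (forall y, a < y < b -> Rabs (Derive_n F (S N) y) <= Cf) -> CC a b F -> -1 <= t <= 1 ->
  Rabs (F (c + s * t) - rinterp N (fun t => F (c + s * t)) t) <= Cf * (2 * s / INR N) ^ (S N) / INR (S N).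
Proof.
  intros HD HB HC Ht.
  assert (Hs := P_s). assert (HNp : 0 < INR N) by (apply lt_0_INR; lia).
  eapply Rle_trans. apply (interp_error N (fun t => F (c + s * t)) (s ^ (S N) * Cf)); auto.
  - apply P_CC; auto.
  - intros j x Hj Hx. apply (comp_derive F c s a b (S N) x HD (P_inner x Hx)); auto.
  - intros x Hx. rewrite (proj2 (comp_derive F c s a b (S N) x HD (P_inner x Hx))).
    rewrite Rabs_mult, Rabs_pos_eq; [|apply pow_le; lra]. apply Rmult_le_compat_l; [apply pow_le; lra|].
    apply HB, P_inner; auto.
  - eapply Rle_trans. apply Rmult_le_compat_l; [|apply omega_bound; auto].
    apply Rdiv_le_0_compat; [apply Rmult_le_pos; [apply pow_le; lra|apply M_Cf]|apply INR_fact_lt_0].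
    change (fact (S N)) with (S N * fact N)%nat. rewrite mult_INR.
    assert (Hf0 := INR_fact_lt_0 N). assert (0 < INR (S N)) by (apply lt_0_INR; lia).
    replace ((2 * s / INR N) ^ S N) with (s ^ S N * (2 / INR N) ^ S N) by (unfold Rdiv; rewrite <- Rpow_mult_distr; f_equal; ring).
    right. field. repeat split; lra.
Qed.

Lemma P_err t : -1 <= t <= 1 -> Cmod (Cminus (gk f ap k t) (interpN N (gk f ap k) t)) <= (hI ap K / INR N) ^ (S N) * Cf.
Proof.
  intros Ht. assert (Hs := P_s). assert (HNp : 0 < INR N) by (apply lt_0_INR; lia). assert (HC0 := M_Cf).
  eapply Rle_trans; [apply Cmod_le_sum|].
  assert (E1 : fst (Cminus (gk f ap k t) (interpN N (gk f ap k) t)) = Fre (c + s * t) - rinterp N (fun t => Fre (c + s * t)) t).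
  { transitivity (fst (gk f ap k t) - fst (interpN N (gk f ap k) t)); [simpl; ring|]. rewrite interpN_re. reflexivity. }
  assert (E2 : snd (Cminus (gk f ap k t) (interpN N (gk f ap k) t)) = Fim (c + s * t) - rinterp N (fun t => Fim (c + s * t)) t).
  { transitivity (snd (gk f ap k t) - snd (interpN N (gk f ap k) t)); [simpl; ring|]. rewrite interpN_im. reflexivity. }
  rewrite E1, E2.
  assert (B1 := P_err1 Fre t M_dre M_bre M_CCre Ht). assert (B2 := P_err1 Fim t M_dim M_bim M_CCim Ht).
  assert (Hpow : (2 * s / INR N) ^ S N <= (hI ap K / INR N) ^ S N).
  { apply pow_incr. split. apply Rdiv_le_0_compat; lra. unfold Rdiv. apply Rmult_le_compat_r.
    left; apply Rinv_0_lt_compat; auto. apply P_2s. }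
  assert (HS1 : 2 <= INR (S N)) by (rewrite S_INR; assert (1 <= INR N) by (apply (le_INR 1); lia); lra).
  assert (0 <= (2 * s / INR N) ^ S N) by (apply pow_le; apply Rdiv_le_0_compat; lra).
  assert (Cf * (2 * s / INR N) ^ S N / INR (S N) <= Cf * (2 * s / INR N) ^ S N / 2).
  { unfold Rdiv. apply Rmult_le_compat_l. apply Rmult_le_pos; auto. apply Rinv_le_contravar; lra. }
  nra.
Qed.
Lemma P_L2 : L2norm (fun t => Cminus (gk f ap k t) (interpN N (gk f ap k) t)) <= sqrt 2 * (hI ap K ^ (N + 1) / INR N ^ (N + 1)) * Cf.
Proof.
  assert (HNp : 0 < INR N) by (apply lt_0_INR; lia). assert (HC0 := M_Cf).
  assert (HhI : 0 <= hI ap K) by (generalize (hI_ge ap K k Hk) (Hinc k Hk); lra).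
  set (B := (hI ap K / INR N) ^ (S N) * Cf).
  assert (HB : 0 <= B) by (unfold B; apply Rmult_le_pos; auto; apply pow_le, Rdiv_le_0_compat; lra).
  set (e := fun t => Cminus (gk f ap k t) (interpN N (gk f ap k) t)).
  assert (Hg : goodf e).
  { apply goodf_ext with (fun t => Cplus (gk f ap k t) (Cmult (RtoC (-1)) (interpN N (gk f ap k) t))).
    intros; unfold e; apply injective_projections; simpl; ring.
    apply fs_good_add. apply P_good. apply fs_good_scl, interp_good. }
  replace (sqrt 2 * (hI ap K ^ (N + 1) / INR N ^ (N + 1)) * Cf) with (sqrt (RInt (fun _ => B ^ 2) (-1) 1)).
  - unfold L2norm. apply sqrt_le_1_alt. apply RInt_le. lra. apply CC_exRInt, Cmod2_CC; auto.
    apply ex_RInt_const. intros x Hx. apply pow_incr. split. apply Cmod_ge_0. apply P_err; lra.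
  - rewrite RInt_const. unfold scal; simpl; unfold mult; simpl.
    replace ((1 - -1) * (B * (B * 1))) with (2 * (B * B)) by ring. rewrite sqrt_mult_alt, sqrt_square; auto; [|lra].
    unfold B. replace (N + 1)%nat with (S N) by lia. unfold Rdiv. rewrite Rpow_mult_distr, pow_inv. ring.
Qed.

Definition Hx (x : R) : R := Cmod (Cminus (f x) (Pfrm N T eps r sig v u f ap K x)) ^ 2.

Lemma P_piece : ex_RInt Hx (ap (k - 1)%nat) (ap k) /\
  RInt Hx (ap (k - 1)%nat) (ap k) = s * L2norm (fun t => Cminus (gk f ap k t) (TSVD N T eps r sig v u (gk f ap k) t)) ^ 2.
Proof.
  assert (Hs := P_s). assert (HT0 : 0 < T) by lra.
  set (Q := TSVD N T eps r sig v u (gk f ap k)).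
  destruct (tsvd_poly N T eps r sig v u (gk f ap k) HT0) as [Q1 Q2]. fold Q in Q1, Q2.
  set (Fk := fun x => Cmod (Cminus (f x) (Q ((x - c) / s))) ^ 2).
  assert (Hlt := Hinc k Hk). assert (Hin := P_in).
  assert (Eq : forall x, ap (k - 1)%nat < x < ap k -> Hx x = Fk x).
  { intros x Hx'. unfold Hx, Fk, Pfrm. rewrite (seg_index_spec ap K Hinc k x Hk); [|lra]. reflexivity. }
  assert (Hcont : forall (P : R -> R), Poly N P -> forall w, continuous (fun x => P ((x - c) / s)) w).
  { intros P HP w. apply (continuous_comp (fun x => (x - c) / s) P); [|eapply Poly_continuous; eauto].
    apply (ex_derive_continuous (K:=R_AbsRing) (V:=R_NormedModule)). auto_derive; auto. }
  assert (CFk : CC (ap (k - 1)%nat) (ap k) Fk).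
  { apply CC_ext with (fun x => fst (Cmult (Cminus (f x) (Q ((x - c) / s))) (Cconj (Cminus (f x) (Q ((x - c) / s)))))).
    intros; unfold Fk; rewrite Cmod2; simpl; ring. lra.
    assert (CA : CC (ap (k - 1)%nat) (ap k) (fun x => Fre x + (-1) * fst (Q ((x - c) / s)))).
    { apply CC_plus. apply (CC_sub a b); try lra; apply M_CCre. apply CC_scal, CC_of_cont; [lra|]. intros; exact (Hcont (fun t => fst (Q t)) Q1 _). }
    assert (CB : CC (ap (k - 1)%nat) (ap k) (fun x => Fim x + (-1) * snd (Q ((x - c) / s)))).
    { apply CC_plus. apply (CC_sub a b); try lra; apply M_CCim. apply CC_scal, CC_of_cont; [lra|]. intros; exact (Hcont (fun t => snd (Q t)) Q2 _). }
    apply CC_ext with (fun x => (Fre x + (-1) * fst (Q ((x - c) / s))) * (Fre x + (-1) * fst (Q ((x - c) / s))) +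
                              (Fim x + (-1) * snd (Q ((x - c) / s))) * (Fim x + (-1) * snd (Q ((x - c) / s)))).
    intros; unfold Fre, Fim; simpl; ring. lra. apply CC_plus; apply CC_mult; auto. }
  assert (EFk : ex_RInt Fk (ap (k - 1)%nat) (ap k)) by (apply CC_exRInt_gen; auto; lra).
  assert (Hgood : goodf (fun t => Cminus (gk f ap k t) (Q t))).
  { apply goodf_ext with (fun t => Cplus (gk f ap k t) (Cmult (RtoC (-1)) (Q t))).
    intros; apply injective_projections; simpl; ring.
    apply fs_good_add. apply P_good. apply fs_good_scl. split; eapply CC_poly; eauto; lra. }
  assert (ERI : RInt Hx (ap (k - 1)%nat) (ap k) = RInt Fk (ap (k - 1)%nat) (ap k)).
  { apply RInt_ext. intros x Hx'. rewrite Rmin_left, Rmax_right in Hx' by lra. apply Eq; auto. }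
  split.
  - apply (ex_RInt_ext Fk). intros x Hx'. rewrite Rmin_left, Rmax_right in Hx' by lra. symmetry; apply Eq; auto. auto.
  - rewrite ERI. rewrite L2norm_sq; auto.
    rewrite <- P_lo, <- P_hi.
    replace (c + s * -1) with (s * -1 + c) by ring. replace (c + s * 1) with (s * 1 + c) by ring.
    rewrite <- RInt_comp_lin; [|replace (s * -1 + c) with (ap (k - 1)%nat) by (rewrite <- P_lo; ring);
      replace (s * 1 + c) with (ap k) by (rewrite <- P_hi; ring); auto].
    rewrite <- (RInt_scal (fun t => Cmod (Cminus (gk f ap k t) (Q t)) ^ 2)); [|apply CC_exRInt, Cmod2_CC; auto].
    apply RInt_ext. intros x _. unfold scal; simpl; unfold mult; simpl. f_equal. unfold Fk, gk.
    replace ((s * x + c - c) / s) with x by (field; lra). replace (s * x + c) with (ck ap k + sk ap k * x) by (unfold c, s; ring). reflexivity.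
Qed.
End Piece.
Lemma M_sum m : (m <= K)%nat -> ex_RInt Hx (ap 0%nat) (ap m) /\ RInt Hx (ap 0%nat) (ap m) = rsum (fun j => RInt Hx (ap j) (ap (S j))) m.
Proof.
  induction m; intros Hm.
  - split. apply ex_RInt_point. simpl. apply (RInt_point (V:=R_CompleteNormedModule)).
  - destruct IHm as [E1 E2]; [lia|]. destruct (P_piece (S m) ltac:(lia)) as [E3 _].
    replace (S m - 1)%nat with m in E3 by lia. split.
    apply (ex_RInt_Chasles Hx _ (ap m)); auto.
    rewrite <- (RInt_Chasles Hx _ (ap m)); auto. simpl. rewrite E2. reflexivity.
Qed.

Lemma M_main : exists cint : nat -> nat -> C,
    (forall k, (1 <= k <= K)%nat ->
       (forall t, -1 <= t <= 1 -> interpN N (gk f ap k) t = synth N T (cint k) t) /\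
       L2norm (fun t => Cminus (gk f ap k t) (TSVD N T eps r sig v u (gk f ap k) t))
         <= L2norm (fun t => Cminus (gk f ap k t) (interpN N (gk f ap k) t))
            + eps * vnorm N (cint k) /\
       L2norm (fun t => Cminus (gk f ap k t) (interpN N (gk f ap k) t))
            + eps * vnorm N (cint k)
         <= sqrt 2 * (hI ap K ^ (N + 1) / INR N ^ (N + 1)) * Cf + eps * vnorm N (cint k)) /\
    RInt (fun x => Cmod (Cminus (f x) (Pfrm N T eps r sig v u f ap K x)) ^ 2) a b
      <= rsum (fun j => sk ap (S j) *
                 (sqrt 2 * (hI ap K ^ (N + 1) / INR N ^ (N + 1)) * Cf
                  + eps * vnorm N (cint (S j))) ^ 2) K.
Proof.
  assert (HT0 : 0 < T) by lra.
  set (cint := fun k => proj1_sig (constructive_indefinite_description _ (interp_synth N T (gk f ap k) HT0))).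
  assert (Hc : forall k t, interpN N (gk f ap k) t = synth N T (cint k) t).
  { intros k t. unfold cint. destruct (constructive_indefinite_description _ _); simpl; auto. }
  assert (Hk1 : forall k, (1 <= k <= K)%nat ->
     L2norm (fun t => Cminus (gk f ap k t) (TSVD N T eps r sig v u (gk f ap k) t))
         <= L2norm (fun t => Cminus (gk f ap k t) (interpN N (gk f ap k) t)) + eps * vnorm N (cint k)).
  { intros k Hk. rewrite (L2norm_ext (fun t => Cminus (gk f ap k t) (interpN N (gk f ap k) t)) (fun t => Cminus (gk f ap k t) (synth N T (cint k) t))).
    apply tsvd_bound; auto. apply P_good; auto. intros; rewrite Hc; auto. }
  assert (Hk2 : forall k, (1 <= k <= K)%nat ->
       L2norm (fun t => Cminus (gk f ap k t) (interpN N (gk f ap k) t)) + eps * vnorm N (cint k)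
         <= sqrt 2 * (hI ap K ^ (N + 1) / INR N ^ (N + 1)) * Cf + eps * vnorm N (cint k)).
  { intros k Hk. apply Rplus_le_compat_r. apply P_L2; auto. }
  exists cint. split.
  - intros k Hk. split; [intros; apply Hc|]. split; auto.
  - change (fun x => Cmod (Cminus (f x) (Pfrm N T eps r sig v u f ap K x)) ^ 2) with Hx.
    rewrite <- Ha, <- Hb. rewrite (proj2 (M_sum K ltac:(lia))).
    apply rsum_le. intros j Hj. destruct (P_piece (S j) ltac:(lia)) as [_ E].
    replace (S j - 1)%nat with j in E by lia. rewrite E.
    apply Rmult_le_compat_l. left; apply (P_s (S j)); lia.
    apply pow_incr. split. unfold L2norm; apply sqrt_pos.
    eapply Rle_trans; [apply Hk1|apply Hk2]; lia.
Qed.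
End Main.


Theorem corollary2p3
  (a b : R) (K : nat) (ap : nat -> R) (N : nat) (T eps Cf : R) (f : R -> C)
  (r : nat) (sig : nat -> R) (v : nat -> nat -> C) (u : nat -> R -> C) :
  (1 <= K)%nat -> ap 0%nat = a -> ap K = b ->
  (forall k, (1 <= k <= K)%nat -> ap (k - 1)%nat < ap k) ->
  1 < T -> 0 < eps -> (1 <= N)%nat ->
  Cm_closed_C (N + 1) a b f ->
  (forall x, a < x < b -> Cmod (DeriveC_n f (N + 1) x) <= Cf) ->
  is_SVD N T r sig v u ->
  exists cint : nat -> nat -> C,
    (forall k, (1 <= k <= K)%nat ->
       (forall t, -1 <= t <= 1 -> interpN N (gk f ap k) t = synth N T (cint k) t) /\
       L2norm (fun t => Cminus (gk f ap k t) (TSVD N T eps r sig v u (gk f ap k) t))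
         <= L2norm (fun t => Cminus (gk f ap k t) (interpN N (gk f ap k) t))
            + eps * vnorm N (cint k) /\
       L2norm (fun t => Cminus (gk f ap k t) (interpN N (gk f ap k) t))
            + eps * vnorm N (cint k)
         <= sqrt 2 * (hI ap K ^ (N + 1) / INR N ^ (N + 1)) * Cf + eps * vnorm N (cint k)) /\
    RInt (fun x => Cmod (Cminus (f x) (Pfrm N T eps r sig v u f ap K x)) ^ 2) a b
      <= rsum (fun j => sk ap (S j) *
                 (sqrt 2 * (hI ap K ^ (N + 1) / INR N ^ (N + 1)) * Cf
                  + eps * vnorm N (cint (S j))) ^ 2) K.
Proof.
  intros HK Ha Hb Hinc HT He HN Hf HCf HS.
  apply (M_main a b K ap N T eps Cf f r sig v u); auto.
Qed.
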